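(* Let $K\subset\mathbb{R}^2$ be the Sierpinski gasket, equipped with its geodesic metric $d_{geo}$ (for which it is a compact length space), and let $R_j$, $j\in\mathbb{N}$, be an enumeration, in non-increasing order of length, of all cell edges $F_w([p_a,p_b])$, $w\in W_*$, $1\le a<b\le 3$. Then $K$ satisfies Axioms 1 and 2 with respect to these curves.
   Context: Let $p_1,p_2,p_3$ be the vertices of an equilateral triangle in $\mathbb{R}^2$ and $F_i(x)=\frac12(x-p_i)+p_i$, $i=1,2,3$. The Sierpinski gasket $K$ is the unique nonempty compact set with $K=\bigcup_{i=1}^3F_i(K)$. $W_*$ is the set of finite words $w=w_1\cdots w_m$ ($m\ge0$) over $\{1,2,3\}$ and $F_w=F_{w_1}\circ\cdots\circ F_{w_m}$ ($F_\emptyset=\mathrm{id}$). $[p_a,p_b]$ is the straight segment. $d_{geo}(p,q)$ is the infimum of Euclidean lengths of curves in $K$ joining $p$ and $q$. Each edge is regarded as a curve parametrized by Euclidean arclength. For a compact set $X\subset\mathbb{R}^n$ with geodesic metric $d_{geo}$ (defined likewise) and curves $R_j$: Axiom 1: each $R_j$ is the image of an injective $C^1$ map $r_j:[0,\alpha_j]\to X$ parametrized by arclength ($\alpha_j=L(R_j)<\infty$), $X=\overline{\bigcup_jR_j}$, and $\alpha_j\to0$. Axiom 2: there is a dense set $\mathcal{B}\subset X$ such that for each $p\in\mathcal{B}$ and $q\in X$, some minimizing geodesic (curve of length $d_{geo}(p,q)$) from $p$ to $q$ is a finite or countable concatenation of the $R_j$: there are points $p=p_1,p_2,\dots$ along it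 (finitely many ending at $q$, or infinitely many converging to $q$) such that consecutive $p_k,p_{k+1}$ are the two endpoints of some $R_{j_k}$, traversed by the geodesic between them. *)

(* Defs.v *)
From Stdlib Require Import Reals List Lra.
Open Scope R_scope.

Inductive idx : Type := i1 | i2 | i3.

Definition idx_lt (a b : idx) : Prop :=
  match a, b with
  | i1, i2 | i1, i3 | i2, i3 => True
  | _, _ => False
  end.

Definition pt : Type := (R * R)%type.

Definition edist (x y : pt) : R :=
  sqrt ((fst x - fst y) ^ 2 + (snd x - snd y) ^ 2).

Definition set_eq (A B : pt -> Prop) : Prop := forall x, A x <-> B x.

Definition equilateral (P : idx -> pt) : Prop :=
  P i1 <> P i2 /\
  edist (P i1) (P i2) = edist (P i2) (P i3) /\
  edist (P i2) (P i3) = edist (P i1) (P i3).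

Definition Fmap (P : idx -> pt) (i : idx) (x : pt) : pt :=
  (/ 2 * (fst x - fst (P i)) + fst (P i), / 2 * (snd x - snd (P i)) + snd (P i)).

Fixpoint Fw (P : idx -> pt) (w : list idx) (x : pt) : pt :=
  match w with
  | nil => x
  | i :: w' => Fmap P i (Fw P w' x)
  end.

Definition cell_edge (P : idx -> pt) (w : list idx) (a b : idx) : pt -> Prop :=
  fun x => exists s, 0 <= s <= 1 /\
    x = Fw P w ((1 - s) * fst (P a) + s * fst (P b), (1 - s) * snd (P a) + s * snd (P b)).

Definition edge_length (P : idx -> pt) (w : list idx) (a b : idx) : R :=
  edist (Fw P w (P a)) (Fw P w (P b)).

Definition is_open (U : pt -> Prop) : Prop :=
  forall x, U x -> exists e, 0 < e /\ forall y, edist x y < e -> U y.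

Definition compact_set (K : pt -> Prop) : Prop :=
  forall (I : Type) (U : I -> pt -> Prop),
    (forall i, is_open (U i)) ->
    (forall x, K x -> exists i, U i x) ->
    exists l : list I, forall x, K x -> exists i, In i l /\ U i x.

Definition closure (A : pt -> Prop) (x : pt) : Prop :=
  forall e, 0 < e -> exists y, A y /\ edist x y < e.

Definition self_similar (P : idx -> pt) (K : pt -> Prop) : Prop :=
  forall x, K x <-> exists i y, K y /\ x = Fmap P i y.

Definition is_curve (X : pt -> Prop) (g : R -> pt) (a b : R) (p q : pt) : Prop :=
  a <= b /\ g a = p /\ g b = q /\
  (forall t, a <= t <= b -> X (g t)) /\
  (forall t, a <= t <= b -> forall e, 0 < e -> exists d, 0 < d /\
     forall s, a <= s <= b -> Rabs (s - t) < d -> edist (g s) (g t) < e).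

Fixpoint psum (f : nat -> R) (n : nat) : R :=
  match n with
  | O => 0
  | S n' => psum f n' + f n'
  end.

Definition polygon_lengths (g : R -> pt) (a b : R) : R -> Prop :=
  fun v => exists (N : nat) (s : nat -> R),
    s O = a /\ s N = b /\ (forall k, (k < N)%nat -> s k <= s (S k)) /\
    v = psum (fun k => edist (g (s k)) (g (s (S k)))) N.

Definition is_length (g : R -> pt) (a b l : R) : Prop :=
  is_lub (polygon_lengths g a b) l.

(** A minimizing geodesic in X from p to q: a curve whose length is d_geo(p,q),
    the infimum of the lengths of curves in X joining p and q. *)
Definition min_geodesic (X : pt -> Prop) (g : R -> pt) (a b : R) (p q : pt) : Prop :=
  is_curve X g a b p q /\
  exists l, is_length g a b l /\
    forall (g' : R -> pt) (a' b' l' : R),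
      is_curve X g' a' b' p q -> is_length g' a' b' l' -> l <= l'.

Definition deriv_within (a b : R) (f f' : R -> R) : Prop :=
  forall t, a <= t <= b -> forall e, 0 < e -> exists d, 0 < d /\
    forall s, a <= s <= b -> s <> t -> Rabs (s - t) < d ->
      Rabs ((f s - f t) / (s - t) - f' t) < e.

Definition cont_within (a b : R) (f : R -> R) : Prop :=
  forall t, a <= t <= b -> forall e, 0 < e -> exists d, 0 < d /\
    forall s, a <= s <= b -> Rabs (s - t) < d -> Rabs (f s - f t) < e.

Definition C1_arclength (r : R -> pt) (al : R) : Prop :=
  exists d1 d2 : R -> R,
    deriv_within 0 al (fun t => fst (r t)) d1 /\
    deriv_within 0 al (fun t => snd (r t)) d2 /\
    cont_within 0 al d1 /\ cont_within 0 al d2 /\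
    forall t, 0 <= t <= al -> d1 t ^ 2 + d2 t ^ 2 = 1.

Definition inj_on (r : R -> pt) (al : R) : Prop :=
  forall s t, 0 <= s <= al -> 0 <= t <= al -> r s = r t -> s = t.

Definition image_on (r : R -> pt) (a b : R) : pt -> Prop :=
  fun x => exists t, a <= t <= b /\ r t = x.

Definition Axiom1 (X : pt -> Prop) (Rc : nat -> pt -> Prop)
    (alpha : nat -> R) (r : nat -> R -> pt) : Prop :=
  (forall j,
     inj_on (r j) (alpha j) /\
     C1_arclength (r j) (alpha j) /\
     set_eq (Rc j) (image_on (r j) 0 (alpha j)) /\
     (forall t, 0 <= t <= alpha j -> X (r j t)) /\
     is_length (r j) 0 (alpha j) (alpha j)) /\
  set_eq X (closure (fun x => exists j, Rc j x)) /\
  Un_cv alpha 0.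

Definition traverses (Rc : nat -> pt -> Prop) (alpha : nat -> R) (r : nat -> R -> pt)
    (g : R -> pt) (s u : R) (j : nat) : Prop :=
  set_eq (Rc j) (image_on g s u) /\
  ((g s = r j 0 /\ g u = r j (alpha j)) \/ (g s = r j (alpha j) /\ g u = r j 0)).

(** g on [a,b] is a finite or countable concatenation of the curves Rc j,
    with points p_k = g (t k), p_1 = g a, ending at / converging to q. *)
Definition concat_of_curves (Rc : nat -> pt -> Prop) (alpha : nat -> R)
    (r : nat -> R -> pt) (g : R -> pt) (a b : R) (q : pt) : Prop :=
  (exists (N : nat) (t : nat -> R) (js : nat -> nat),
     t O = a /\ t N = b /\ g b = q /\
     forall k, (k < N)%nat -> t k < t (S k) /\ traverses Rc alpha r g (t k) (t (S k)) (js k))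
  \/
  (exists (t : nat -> R) (js : nat -> nat),
     t O = a /\
     (forall k, t k < t (S k) <= b /\ traverses Rc alpha r g (t k) (t (S k)) (js k)) /\
     (forall e, 0 < e -> exists M, forall k, (M <= k)%nat -> edist (g (t k)) q < e)).

Definition Axiom2 (X : pt -> Prop) (Rc : nat -> pt -> Prop)
    (alpha : nat -> R) (r : nat -> R -> pt) : Prop :=
  exists B : pt -> Prop,
    (forall x, B x -> X x) /\
    (forall x, X x -> closure B x) /\
    forall p q, B p -> X q ->
      exists (g : R -> pt) (a b : R),
        min_geodesic X g a b p q /\ concat_of_curves Rc alpha r g a b q.

(* Main.v *)
Require Import Defs.
From Stdlib Require Import Reals List.
From Stdlib Require Import Lra Lia Psatz Classical ClassicalEpsilon FunctionalExtensionality.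
Open Scope R_scope.

Definition idx_eq_dec (a b : idx) : {a = b} + {a <> b}.
Proof. decide equality. Defined.

Definition dlt (i j : idx) : R := if idx_eq_dec i j then 1 else 0.

Definition ux (P : idx -> pt) := fst (P i2) - fst (P i1).
Definition uy (P : idx -> pt) := snd (P i2) - snd (P i1).
Definition vx (P : idx -> pt) := fst (P i3) - fst (P i1).
Definition vy (P : idx -> pt) := snd (P i3) - snd (P i1).
Definition s2 (P : idx -> pt) := ux P ^ 2 + uy P ^ 2.
Definition dt (P : idx -> pt) := ux P * vy P - uy P * vx P.

Definition lam2 P (x : pt) := ((fst x - fst (P i1)) * vy P - (snd x - snd (P i1)) * vx P) / dt P.
Definition lam3 P (x : pt) := (ux P * (snd x - snd (P i1)) - uy P * (fst x - fst (P i1))) / dt P.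
Definition lam P (i : idx) (x : pt) : R :=
  match i with i1 => 1 - lam2 P x - lam3 P x | i2 => lam2 P x | i3 => lam3 P x end.

Lemma sqrt_eq_sq a b : 0 <= a -> 0 <= b -> sqrt a = sqrt b -> a = b.
Proof. intros Ha Hb H. rewrite <- (sqrt_sqrt a Ha), <- (sqrt_sqrt b Hb), H. ring. Qed.

Lemma equi_facts P : equilateral P ->
  vx P ^ 2 + vy P ^ 2 = s2 P /\ (ux P - vx P) ^ 2 + (uy P - vy P) ^ 2 = s2 P /\ 0 < s2 P.
Proof.
  intros [Hne [H1 H2]]. unfold edist in *. unfold s2, ux, uy, vx, vy.
  destruct (P i1) as [a1 b1], (P i2) as [a2 b2], (P i3) as [a3 b3]; cbn [fst snd] in *.
  apply sqrt_eq_sq in H1; [|apply Rplus_le_le_0_compat; apply pow2_ge_0 ..].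
  apply sqrt_eq_sq in H2; [|apply Rplus_le_le_0_compat; apply pow2_ge_0 ..].
  split; [nra|split; [nra|]].
  destruct (Req_dec a1 a2); destruct (Req_dec b1 b2); [subst; congruence| nra | nra | nra].
Qed.

Lemma dot_uv P : equilateral P -> ux P * vx P + uy P * vy P = s2 P / 2.
Proof. intros H; destruct (equi_facts P H) as [A [B C]]. unfold s2 in *. nra. Qed.

Lemma dt_sq P : equilateral P -> dt P ^ 2 = 3/4 * s2 P ^ 2.
Proof. intros H; destruct (equi_facts P H) as [A [B C]]. pose proof (dot_uv P H).
  unfold dt, s2 in *.
  assert (dt P ^2 = (ux P^2+uy P^2)*(vx P^2+vy P^2) - (ux P * vx P + uy P * vy P)^2) by (unfold dt; ring).
  unfold dt in H1. rewrite H1, H0, A. unfold s2. field. Qed.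

Lemma dt_nz P : equilateral P -> dt P <> 0.
Proof. intros H Hd. pose proof (dt_sq P H). destruct (equi_facts P H) as [_ [_ C]].
  rewrite Hd in H0. nra. Qed.

Lemma recon P x : equilateral P ->
  x = (fst (P i1) + lam2 P x * ux P + lam3 P x * vx P, snd (P i1) + lam2 P x * uy P + lam3 P x * vy P).
Proof. intros H. pose proof (dt_nz P H). destruct x as [x1 x2]. unfold lam2, lam3, dt in *; simpl.
  f_equal; field; auto. Qed.

Lemma pt_eq_lam P x y : equilateral P -> lam2 P x = lam2 P y -> lam3 P x = lam3 P y -> x = y.
Proof. intros H A B. rewrite (recon P x H), (recon P y H), A, B. reflexivity. Qed.

Lemma lam_sum P x : lam P i1 x + lam P i2 x + lam P i3 x = 1.
Proof. simpl. ring. Qed.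

Lemma edist_sq P x y : equilateral P ->
  edist x y ^ 2 = s2 P * ((lam2 P x - lam2 P y)^2 + (lam3 P x - lam3 P y)^2 + (lam2 P x - lam2 P y) * (lam3 P x - lam3 P y)).
Proof. intros H. unfold edist. rewrite pow2_sqrt by (apply Rplus_le_le_0_compat; apply pow2_ge_0).
  rewrite (recon P x H) at 1 2. rewrite (recon P y H) at 1 2. simpl.
  pose proof (dot_uv P H). destruct (equi_facts P H) as [A [_ _]]. unfold s2 in *.
  set (a := lam2 P x - lam2 P y). set (b := lam3 P x - lam3 P y).
  replace (fst (P i1) + lam2 P x * ux P + lam3 P x * vx P - (fst (P i1) + lam2 P y * ux P + lam3 P y * vx P)) with (a * ux P + b * vx P) by (unfold a, b; ring).
  replace (snd (P i1) + lam2 P x * uy P + lam3 P x * vy P - (snd (P i1) + lam2 P y * uy P + lam3 P y * vy P)) with (a * uy P + b * vy P) by (unfold a, b; ring).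
  transitivity (a^2 * (ux P^2+uy P^2) + b^2 * (vx P^2+vy P^2) + 2*a*b*(ux P*vx P+uy P*vy P)); [ring|].
  rewrite H0, A. field. Qed.

Lemma lam_P P i j : equilateral P -> lam P i (P j) = dlt i j.
Proof. intros H. pose proof (dt_nz P H). unfold dlt.
  destruct i, j; simpl; unfold lam2, lam3, dt in *; unfold ux, uy, vx, vy in *; try (field; auto);
  repeat match goal with |- context [idx_eq_dec ?a ?b] => destruct (idx_eq_dec a b); try discriminate end;
  try (field; auto); try congruence. Qed.

Definition seg (x y : pt) (t : R) : pt := ((1-t)*fst x + t*fst y, (1-t)*snd x + t*snd y).

Lemma lam_seg P i x y t : equilateral P -> lam P i (seg x y t) = (1-t) * lam P i x + t * lam P i y.
Proof. intros H. pose proof (dt_nz P H). destruct i; simpl; unfold lam2, lam3, seg; simpl; field; auto. Qed.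

Lemma Fmap_seg P j x : Fmap P j x = seg x (P j) (/2).
Proof. unfold Fmap, seg; simpl; f_equal; field. Qed.

Lemma lam_Fmap P i j x : equilateral P -> lam P i (Fmap P j x) = (lam P i x + dlt i j) / 2.
Proof. intros H. rewrite Fmap_seg, lam_seg, lam_P by auto. field. Qed.

Definition h (n : nat) : R := (/2) ^ n.

Fixpoint kap (i : idx) (w : list idx) : R :=
  match w with nil => 0 | j :: w' => (kap i w' + dlt i j) / 2 end.

Lemma lam_Fw P i w x : equilateral P -> lam P i (Fw P w x) = h (length w) * lam P i x + kap i w.
Proof. intros H. induction w as [|j w IH]; simpl.
  - unfold h; simpl; ring.
  - rewrite lam_Fmap by auto. rewrite IH. unfold h; simpl. field. Qed.

Lemma Fmap_seg2 P j x y t : Fmap P j (seg x y t) = seg (Fmap P j x) (Fmap P j y) t.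
Proof. unfold Fmap, seg; simpl; f_equal; ring. Qed.

Lemma Fw_seg P w x y t : Fw P w (seg x y t) = seg (Fw P w x) (Fw P w y) t.
Proof. induction w; simpl; auto. rewrite IHw. apply Fmap_seg2. Qed.

Lemma h_pos n : 0 < h n.
Proof. unfold h. apply pow_lt. lra. Qed.
Lemma h_S n : h (S n) = h n / 2.
Proof. unfold h; simpl. field. Qed.
Lemma Fw_diff1 P w x y : fst (Fw P w x) - fst (Fw P w y) = h (length w) * (fst x - fst y).
Proof. induction w; simpl. unfold h; simpl; ring. transitivity (/2 * (fst (Fw P w x) - fst (Fw P w y))); [ring|]. rewrite IHw, h_S. field. Qed.
Lemma Fw_diff2 P w x y : snd (Fw P w x) - snd (Fw P w y) = h (length w) * (snd x - snd y).
Proof. induction w; simpl. unfold h; simpl; ring. transitivity (/2 * (snd (Fw P w x) - snd (Fw P w y))); [ring|]. rewrite IHw, h_S. field. Qed.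

Lemma h_le1 n : h n <= 1.
Proof. induction n. unfold h; simpl; lra. rewrite h_S. pose proof (h_pos n). lra. Qed.

Lemma edist_Fw P w x y : edist (Fw P w x) (Fw P w y) = h (length w) * edist x y.
Proof. unfold edist. rewrite Fw_diff1, Fw_diff2.
  replace ((h (length w) * (fst x - fst y)) ^ 2 + (h (length w) * (snd x - snd y)) ^ 2)
   with (h (length w) ^2 * ((fst x - fst y) ^ 2 + (snd x - snd y) ^ 2)) by ring.
  rewrite sqrt_mult_alt by (apply pow2_ge_0). rewrite sqrt_pow2 by (left; apply h_pos). auto. Qed.

Lemma edist_ge0 x y : 0 <= edist x y.
Proof. apply sqrt_pos. Qed.
Lemma edist_sym x y : edist x y = edist y x.
Proof. unfold edist. f_equal. ring. Qed.
Lemma edist_tri x y z : edist x z <= edist x y + edist y z.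
Proof. destruct x as [a b], y as [c d], z as [e f]. unfold edist; simpl.
  pose proof (Rgeom.triangle a b e f c d). unfold Rgeom.dist_euc, Rsqr in H. simpl.
  replace ((a-e)*((a-e)*1)) with ((a-e)*(a-e)) by ring.
  replace ((b-f)*((b-f)*1)) with ((b-f)*(b-f)) by ring.
  replace ((a-c)*((a-c)*1)) with ((a-c)*(a-c)) by ring.
  replace ((b-d)*((b-d)*1)) with ((b-d)*(b-d)) by ring.
  replace ((c-e)*((c-e)*1)) with ((c-e)*(c-e)) by ring.
  replace ((d-f)*((d-f)*1)) with ((d-f)*(d-f)) by ring. exact H. Qed.
Lemma edist_refl x : edist x x = 0.
Proof. unfold edist. replace ((fst x - fst x) ^ 2 + (snd x - snd x) ^ 2) with 0 by ring. apply sqrt_0. Qed.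
Lemma edist_eq0 x y : edist x y = 0 -> x = y.
Proof. unfold edist. intros H. apply sqrt_eq_0 in H; [|apply Rplus_le_le_0_compat; apply pow2_ge_0].
  destruct x as [a b], y as [c d]; simpl in *.
  pose proof (pow2_ge_0 (a-c)). pose proof (pow2_ge_0 (b-d)).
  assert (E1: (a-c)^2 = 0) by lra. assert (E2: (b-d)^2 = 0) by lra.
  assert (a-c=0) by (apply Rsqr_0_uniq; unfold Rsqr; lra). assert (b-d=0) by (apply Rsqr_0_uniq; unfold Rsqr; lra). f_equal; lra. Qed.

Lemma edist_seg x y t : edist (seg x y t) x = Rabs t * edist y x.
Proof. unfold edist, seg; cbn [fst snd].
  replace (((1 - t) * fst x + t * fst y - fst x) ^ 2 + ((1 - t) * snd x + t * snd y - snd x) ^ 2)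
   with (t^2 * ((fst y - fst x) ^ 2 + (snd y - snd x) ^ 2)) by ring.
  rewrite sqrt_mult_alt by apply pow2_ge_0. f_equal. rewrite <- sqrt_Rsqr_abs. unfold Rsqr. f_equal. ring. Qed.

Lemma seg_sym x y t : seg x y t = seg y x (1 - t).
Proof. unfold seg; f_equal; ring. Qed.
Lemma seg0 x y : seg x y 0 = x.
Proof. unfold seg; destruct x; simpl; f_equal; ring. Qed.
Lemma seg1 x y : seg x y 1 = y.
Proof. unfold seg; destruct y; simpl; f_equal; ring. Qed.

Lemma Fw_app P w v x : Fw P (w ++ v) x = Fw P w (Fw P v x).
Proof. induction w; simpl; congruence. Qed.

Lemma Fmap_fix P a : Fmap P a (P a) = P a.
Proof. unfold Fmap. destruct (P a); simpl; f_equal; ring. Qed.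

Lemma h_inv n : h n <= / INR (S n).
Proof. induction n. unfold h; simpl; lra.
  rewrite h_S. rewrite !S_INR. rewrite S_INR in IHn. pose proof (pos_INR n).
  apply Rle_trans with (/ (INR n + 1) / 2); [lra|].
  replace (/ (INR n + 1) / 2) with (/ (2 * (INR n + 1))) by (field; apply Rgt_not_eq; lra).
  apply Rinv_le_contravar; lra. Qed.

Lemma h_small e : 0 < e -> exists n, h n < e.
Proof. intros He. destruct (archimed_cor1 e He) as [N [HN HN0]]. exists N.
  apply Rle_lt_trans with (/ INR (S N)); [apply h_inv|].
  apply Rle_lt_trans with (/ INR N); auto. apply Rinv_le_contravar. apply lt_0_INR; lia.
  apply le_INR; lia. Qed.

Lemma h_mono n m : (n <= m)%nat -> h m <= h n.
Proof. induction 1. lra. rewrite h_S. pose proof (h_pos m). lra. Qed.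

Lemma h_smallC e C : 0 < e -> 0 <= C -> exists n, h n * C < e.
Proof. intros He HC. destruct (h_small (e / (C+1))) as [n Hn]. apply Rdiv_lt_0_compat; lra.
  exists n. pose proof (h_pos n). apply Rle_lt_trans with (h n * (C+1)). nra.
  apply Rmult_lt_reg_r with (/(C+1)). apply Rinv_0_lt_compat; lra. rewrite Rmult_assoc, Rinv_r by lra. lra. Qed.

Lemma h_add n m : h (n + m) = h n * h m.
Proof. unfold h. apply pow_add. Qed.

Lemma K_Fw P K w y : self_similar P K -> K y -> K (Fw P w y).
Proof. intros HS Hy. induction w; simpl; auto. apply HS. eauto. Qed.

Lemma K_iter P K x n : self_similar P K -> K x ->
  exists w y, length w = n /\ K y /\ x = Fw P w y.
Proof. intros HS Hx. induction n.
  - exists nil, x. auto.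
  - destruct IHn as [w [y [Hl [Hy ->]]]]. apply HS in Hy. destruct Hy as [i [y' [Hy' ->]]].
    exists (w ++ i :: nil), y'. rewrite length_app, Fw_app. simpl. split; [lia|auto]. Qed.

Lemma list_nat_bound (l : list nat) : exists N, forall i, In i l -> (i <= N)%nat.
Proof. induction l as [|a l [N HN]]. exists O; simpl; tauto.
  exists (Nat.max a N). intros i [->|Hi]; [lia|]. specialize (HN i Hi); lia. Qed.

Lemma K_closed K x : compact_set K -> closure K x -> K x.
Proof. intros HC Hcl. apply NNPP. intros Hx.
  destruct (HC nat (fun n y => / INR (S n) < edist x y)) as [l Hl].
  - intros n y Hy. exists (edist x y - / INR (S n)). split; [lra|]. intros z Hz.
    pose proof (edist_tri x z y). rewrite (edist_sym z y) in H. lra.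
  - intros y Hy. assert (0 < edist x y).
    { destruct (edist_ge0 x y); auto. exfalso. apply Hx. symmetry in H; apply edist_eq0 in H; congruence. }
    destruct (archimed_cor1 _ H) as [N [HN HN0]]. exists N.
    apply Rle_lt_trans with (/ INR N); auto. apply Rinv_le_contravar. apply lt_0_INR; lia. apply le_INR; lia.
  - destruct (list_nat_bound l) as [N HN].
    destruct (Hcl (/ INR (S N))) as [y [Hy Hxy]]. apply Rinv_0_lt_compat, lt_0_INR; lia.
    destruct (Hl y Hy) as [i [Hi Hu]]. specialize (HN i Hi).
    assert (/ INR (S N) <= / INR (S i)). apply Rinv_le_contravar. apply lt_0_INR; lia. apply le_INR; lia.
    lra. Qed.

Lemma K_bdd P K : compact_set K -> exists M, 0 <= M /\ forall x, K x -> edist x (P i1) <= M.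
Proof. intros HC.
  destruct (HC nat (fun n y => edist y (P i1) < INR n)) as [l Hl].
  - intros n y Hy. exists (INR n - edist y (P i1)). split; [lra|]. intros z Hz.
    pose proof (edist_tri z y (P i1)). rewrite edist_sym in Hz. lra.
  - intros y Hy. destruct (INR_archimed 1 (edist y (P i1))) as [n Hn]; [lra|]. exists n. lra.
  - destruct (list_nat_bound l) as [N HN]. exists (INR N). split. apply pos_INR.
    intros x Hx. destruct (Hl x Hx) as [i [Hi Hu]]. specialize (HN i Hi). apply le_INR in HN. lra. Qed.

Lemma lam_p1 P : equilateral P -> lam2 P (P i1) = 0 /\ lam3 P (P i1) = 0.
Proof. intros H. pose proof (lam_P P i2 i1 H). pose proof (lam_P P i3 i1 H). unfold dlt in *. simpl in *.
  destruct (idx_eq_dec i2 i1); [discriminate|]. destruct (idx_eq_dec i3 i1); [discriminate|]. auto. Qed.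

Lemma lam_bdd P K : equilateral P -> compact_set K ->
  exists M, 0 <= M /\ forall i x, K x -> Rabs (lam P i x) <= M.
Proof. intros HE HC. destruct (K_bdd P K HC) as [M [HM HB]].
  destruct (equi_facts P HE) as [_ [_ Hs]].
  set (C := 4 * M^2 / s2 P).
  assert (HC0 : 0 <= C) by (unfold C; apply Rmult_le_pos; [nra|left; apply Rinv_0_lt_compat; auto]).
  exists (3 + 2*C). split; [lra|]. intros i x Hx. specialize (HB x Hx).
  pose proof (edist_sq P x (P i1) HE). destruct (lam_p1 P HE) as [A B]. rewrite A, B in H.
  set (a := lam2 P x) in *. set (b := lam3 P x) in *.
  assert (Hq : s2 P * ((a - 0) ^ 2 + (b - 0) ^ 2 + (a - 0) * (b - 0)) <= M^2).
  { rewrite <- H. pose proof (edist_ge0 x (P i1)). nra. }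
  assert (Hab : a^2 + b^2 <= C).
  { assert (E : s2 P * C = 4 * M^2) by (unfold C; field; apply Rgt_not_eq; lra).
    apply Rmult_le_reg_l with (s2 P); auto. rewrite E.
    assert (0 <= (a+b)^2) by apply pow2_ge_0. nra. }
  assert (Ha : Rabs a <= 1 + C) by (unfold Rabs; destruct (Rcase_abs a); nra).
  assert (Hb : Rabs b <= 1 + C) by (unfold Rabs; destruct (Rcase_abs b); nra).
  revert Ha Hb. destruct i; simpl; fold a b; intros; split_Rabs; lra.
Qed.

Lemma dlt_ge0 i j : 0 <= dlt i j.
Proof. unfold dlt; destruct (idx_eq_dec i j); lra. Qed.
Lemma dlt_le1 i j : dlt i j <= 1.
Proof. unfold dlt; destruct (idx_eq_dec i j); lra. Qed.

Lemma kap_ge0 i w : 0 <= kap i w.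
Proof. induction w; simpl. lra. pose proof (dlt_ge0 i a). lra. Qed.

Lemma K_tri P K x i : equilateral P -> compact_set K -> self_similar P K -> K x -> 0 <= lam P i x.
Proof. intros HE HC HS Hx. apply Rnot_lt_le. intros Hlt.
  destruct (lam_bdd P K HE HC) as [M [HM HB]].
  destruct (h_smallC (- lam P i x) M) as [n Hn]; [lra|auto|].
  destruct (K_iter P K x n HS Hx) as [w [y [Hl [Hy ->]]]].
  rewrite lam_Fw in Hlt by auto. rewrite Hl in Hlt. pose proof (kap_ge0 i w).
  specialize (HB i y Hy). pose proof (h_pos n). rewrite lam_Fw, Hl in Hn by auto.
  assert (- M <= lam P i y) by (revert HB; split_Rabs; lra). nra. Qed.

Lemma Fw_repeat_fix P a n : Fw P (repeat a n) (P a) = P a.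
Proof. induction n; simpl; auto. rewrite IHn. apply Fmap_fix. Qed.

Lemma K_vert P K w a : compact_set K -> (exists x, K x) -> self_similar P K -> K (Fw P w (P a)).
Proof. intros HC [y0 Hy0] HS. apply K_closed; auto. intros e He.
  destruct (h_smallC e (edist (P a) y0)) as [n Hn]; auto. apply edist_ge0.
  exists (Fw P w (Fw P (repeat a n) y0)). split. apply K_Fw; auto. apply K_Fw; auto.
  rewrite edist_Fw. rewrite <- (Fw_repeat_fix P a n) at 1. rewrite edist_Fw, repeat_length.
  pose proof (h_le1 (length w)). pose proof (h_pos (length w)). pose proof (h_pos n).
  pose proof (edist_ge0 (P a) y0). nra. Qed.

Lemma Fmap_seg_a P a b u : Fmap P a (seg (P a) (P b) u) = seg (P a) (P b) (u/2).
Proof. unfold Fmap, seg; simpl; f_equal; field. Qed.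
Lemma Fmap_seg_b P a b u : Fmap P b (seg (P a) (P b) u) = seg (P a) (P b) ((1+u)/2).
Proof. unfold Fmap, seg; simpl; f_equal; field. Qed.

Lemma seg_bisect P a b n t : 0 <= t <= 1 ->
  exists v t', length v = n /\ 0 <= t' <= 1 /\ seg (P a) (P b) t = Fw P v (seg (P a) (P b) t').
Proof. intros Ht. induction n.
  - exists nil, t. simpl; auto.
  - destruct IHn as [v [t' [Hl [Ht' E]]]]. destruct (Rle_dec t' (1/2)).
    + exists (v ++ a :: nil), (2*t'). rewrite length_app, Fw_app; simpl. split; [lia|]. split; [lra|].
      rewrite Fmap_seg_a. rewrite E. replace (2*t'/2) with t' by field. reflexivity.
    + exists (v ++ b :: nil), (2*t'-1). rewrite length_app, Fw_app; simpl. split; [lia|]. split; [lra|].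
      rewrite Fmap_seg_b. rewrite E. replace ((1 + (2*t'-1))/2) with t' by field. reflexivity. Qed.

Lemma K_seg P K a b t : compact_set K -> (exists x, K x) -> self_similar P K -> 0 <= t <= 1 ->
  K (seg (P a) (P b) t).
Proof. intros HC Hne HS Ht. apply K_closed; auto. intros e He.
  destruct (h_smallC e (edist (P b) (P a))) as [n Hn]; auto. apply edist_ge0.
  destruct (seg_bisect P a b n t Ht) as [v [t' [Hl [Ht' E]]]].
  exists (Fw P v (P a)). split. apply K_vert; auto.
  rewrite E, edist_Fw, edist_seg, Hl. rewrite Rabs_pos_eq by lra.
  pose proof (h_pos n). pose proof (edist_ge0 (P b) (P a)).
  apply Rle_lt_trans with (h n * edist (P b) (P a)); auto. apply Rmult_le_compat_l; [lra|]. nra. Qed.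

Lemma K_edge P K w a b x : compact_set K -> (exists x, K x) -> self_similar P K ->
  cell_edge P w a b x -> K x.
Proof. intros HC Hne HS [t [Ht ->]]. change (K (Fw P w (seg (P a) (P b) t))).
  apply K_Fw; auto. apply K_seg; auto. Qed.

Lemma K_approx P K : compact_set K -> self_similar P K ->
  exists M, 0 <= M /\ forall x n, K x -> exists w, length w = n /\ edist x (Fw P w (P i1)) <= h n * M.
Proof. intros HC HS. destruct (K_bdd P K HC) as [M [HM HB]]. exists M. split; auto.
  intros x n Hx. destruct (K_iter P K x n HS Hx) as [w [y [Hl [Hy ->]]]]. exists w. split; auto.
  rewrite edist_Fw, Hl. pose proof (h_pos n). specialize (HB y Hy). nra. Qed.

Definition side P := edist (P i1) (P i2).

Lemma side_ab P a b : equilateral P -> a <> b -> edist (P a) (P b) = side P.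
Proof. intros [Hne [H1 H2]] Hab. unfold side.
  destruct a, b; try congruence; repeat rewrite (edist_sym (P i2) (P i1)) in *;
  repeat rewrite (edist_sym (P i3) (P i1)) in *; repeat rewrite (edist_sym (P i3) (P i2)) in *; lra. Qed.

Lemma side_pos P : equilateral P -> 0 < side P.
Proof. intros HE. unfold side. destruct (edist_ge0 (P i1) (P i2)); auto.
  exfalso. destruct HE as [Hne _]. apply Hne. apply edist_eq0. auto. Qed.

Lemma edge_length_eq P w a b : equilateral P -> a <> b -> edge_length P w a b = h (length w) * side P.
Proof. intros HE Hab. unfold edge_length. rewrite edist_Fw, side_ab; auto. Qed.

Lemma idx_lt_neq a b : idx_lt a b -> a <> b.
Proof. destruct a, b; simpl; intros; try tauto; discriminate. Qed.

Lemma seg_dist x y u v : edist (seg x y u) (seg x y v) = Rabs (u - v) * edist x y.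
Proof. unfold edist, seg; cbn [fst snd].
  replace (((1 - u) * fst x + u * fst y - ((1 - v) * fst x + v * fst y)) ^ 2 +
   ((1 - u) * snd x + u * snd y - ((1 - v) * snd x + v * snd y)) ^ 2)
   with ((u-v)^2 * ((fst x - fst y) ^ 2 + (snd x - snd y) ^ 2)) by ring.
  rewrite sqrt_mult_alt by apply pow2_ge_0. f_equal. rewrite <- sqrt_Rsqr_abs. unfold Rsqr. f_equal. ring. Qed.

Lemma seg_inj x y u v : x <> y -> seg x y u = seg x y v -> u = v.
Proof. intros Hxy E. assert (edist (seg x y u) (seg x y v) = 0) by (rewrite E; apply edist_refl).
  rewrite seg_dist in H. assert (0 < edist x y).
  { destruct (edist_ge0 x y); auto. exfalso. apply Hxy, edist_eq0; auto. }
  assert (Rabs (u - v) = 0) by (apply Rmult_eq_reg_r with (edist x y); lra).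
  revert H1. split_Rabs; lra. Qed.

Lemma seg_seg x y u1 u2 v : seg (seg x y u1) (seg x y u2) v = seg x y ((1-v)*u1 + v*u2).
Proof. unfold seg; simpl; f_equal; ring. Qed.

Definition segset (x y : pt) : pt -> Prop := fun z => exists u, 0 <= u <= 1 /\ z = seg x y u.

Lemma seg_ends A B C D : A <> B -> set_eq (segset A B) (segset C D) ->
  (A = C /\ B = D) \/ (A = D /\ B = C).
Proof. intros HAB E.
  destruct (proj2 (E C)) as [u1 [Hu1 EC]]. exists 0; split; [lra|]. symmetry; apply seg0.
  destruct (proj2 (E D)) as [u2 [Hu2 ED]]. exists 1; split; [lra|]. symmetry; apply seg1.
  destruct (proj1 (E A)) as [v1 [Hv1 EA]]. exists 0; split; [lra|]. symmetry; apply seg0.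
  destruct (proj1 (E B)) as [v2 [Hv2 EB]]. exists 1; split; [lra|]. symmetry; apply seg1.
  rewrite EC, ED, seg_seg in EA, EB. rewrite <- (seg0 A B) in EA at 1. rewrite <- (seg1 A B) in EB at 1.
  apply seg_inj in EA; auto. apply seg_inj in EB; auto.
  assert (Ha: (1 - v1) * u1 = 0 /\ v1 * u2 = 0) by (split; nra).
  assert (Hb: (1 - v2) * (1 - u1) = 0 /\ v2 * (1 - u2) = 0) by (split; nra).
  destruct (Req_dec u1 0) as [Z1|Z1].
  - left. assert (u2 = 1).
    { destruct (Req_dec v2 0). subst. nra. destruct Hb as [_ Hb]. apply Rmult_integral in Hb. lra. }
    subst. rewrite seg0, seg1. auto.
  - right. destruct Ha as [Ha1 Ha2]. apply Rmult_integral in Ha1. destruct Ha1 as [Ha1|]; [|lra].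
    assert (v1 = 1) by lra. subst v1. assert (u2 = 0) by lra. subst u2.
    destruct Hb as [Hb1 Hb2]. assert (v2 = 0) by lra. subst v2. assert (u1 = 1) by lra. subst.
    rewrite seg0, seg1. auto. Qed.

Lemma cell_edge_segset P w a b x : cell_edge P w a b x <-> segset (Fw P w (P a)) (Fw P w (P b)) x.
Proof. unfold cell_edge, segset. split; intros [u [Hu E]]; exists u; split; auto;
  rewrite E; change (Fw P w (seg (P a) (P b) u) = seg (Fw P w (P a)) (Fw P w (P b)) u) ||
  change (seg (Fw P w (P a)) (Fw P w (P b)) u = Fw P w (seg (P a) (P b) u)); rewrite Fw_seg; auto. Qed.

Lemma segset_sym x y z : segset x y z <-> segset y x z.
Proof. unfold segset; split; intros [u [Hu E]]; exists (1-u); split; try lra; rewrite E, seg_sym;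
  f_equal; ring. Qed.

Fixpoint psum_tel (s : nat -> R) (N : nat) : psum (fun k => s (S k) - s k) N = s N - s O.
Proof. destruct N; simpl. ring. rewrite psum_tel. ring. Qed.

Lemma psum_le (f g : nat -> R) N : (forall k, (k < N)%nat -> f k <= g k) -> psum f N <= psum g N.
Proof. induction N; simpl; intros H. lra. pose proof (H N (Nat.lt_succ_diag_r N)).
  assert (psum f N <= psum g N) by (apply IHN; intros; apply H; lia). lra. Qed.

Lemma psum_ext (f g : nat -> R) N : (forall k, (k < N)%nat -> f k = g k) -> psum f N = psum g N.
Proof. induction N; simpl; intros H. auto. rewrite IHN by (intros; apply H; lia). rewrite H by lia. auto. Qed.

Lemma iso_length (g : R -> pt) a b : a <= b -> (forall s t, edist (g s) (g t) = Rabs (s - t)) ->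
  is_length g a b (b - a).
Proof. intros Hab Hg. unfold is_length.
  assert (Hpoly : forall v, polygon_lengths g a b v -> v = b - a).
  { intros v [N [s [H0 [HN [Hm ->]]]]]. rewrite <- H0, <- HN, <- psum_tel.
    apply psum_ext. intros k Hk. rewrite Hg. specialize (Hm k Hk). rewrite Rabs_left1 by lra. ring. }
  split.
  - intros v Hv. rewrite (Hpoly v Hv). lra.
  - intros u Hu. apply Hu. exists 1%nat, (fun k => match k with O => a | _ => b end).
    split; [auto|]. split; [auto|]. split. intros k Hk. destruct k; [lra|lia].
    simpl. rewrite Hg. rewrite Rabs_left1 by lra. ring. Qed.

Definition Aj P (W : nat -> list idx) (Aa : nat -> idx) j := Fw P (W j) (P (Aa j)).
Definition alph P (W : nat -> list idx) (Aa Bb : nat -> idx) j := edge_length P (W j) (Aa j) (Bb j).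
Definition rr P (W : nat -> list idx) (Aa Bb : nat -> idx) j t := seg (Aj P W Aa j) (Aj P W Bb j) (t / alph P W Aa Bb j).

Lemma alph_eq P W Aa Bb j : alph P W Aa Bb j = edist (Aj P W Aa j) (Aj P W Bb j).
Proof. reflexivity. Qed.

Lemma alph_pos P W Aa Bb j : equilateral P -> Aa j <> Bb j -> 0 < alph P W Aa Bb j.
Proof. intros HE H. unfold alph. rewrite edge_length_eq; auto.
  apply Rmult_lt_0_compat. apply h_pos. apply side_pos; auto. Qed.

Lemma Aj_neq P W Aa Bb j : equilateral P -> Aa j <> Bb j -> Aj P W Aa j <> Aj P W Bb j.
Proof. intros HE H E. pose proof (alph_pos P W Aa Bb j HE H). rewrite alph_eq, E, edist_refl in H0. lra. Qed.

Lemma rr_dist P W Aa Bb j s t : equilateral P -> Aa j <> Bb j ->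
  edist (rr P W Aa Bb j s) (rr P W Aa Bb j t) = Rabs (s - t).
Proof. intros HE H. unfold rr. rewrite seg_dist, <- alph_eq. pose proof (alph_pos P W Aa Bb j HE H).
  set (al := alph P W Aa Bb j) in *. replace (s / al - t / al) with ((s - t) / al) by (field; lra).
  unfold Rdiv. rewrite Rabs_mult, Rabs_inv, (Rabs_pos_eq al) by lra. field. lra. Qed.

Lemma axiom1_curve P K Rc W Aa Bb j : equilateral P -> compact_set K -> (exists x, K x) -> self_similar P K ->
  idx_lt (Aa j) (Bb j) -> set_eq (Rc j) (cell_edge P (W j) (Aa j) (Bb j)) ->
  inj_on (rr P W Aa Bb j) (alph P W Aa Bb j) /\
  C1_arclength (rr P W Aa Bb j) (alph P W Aa Bb j) /\
  set_eq (Rc j) (image_on (rr P W Aa Bb j) 0 (alph P W Aa Bb j)) /\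
  (forall t, 0 <= t <= alph P W Aa Bb j -> K (rr P W Aa Bb j t)) /\
  is_length (rr P W Aa Bb j) 0 (alph P W Aa Bb j) (alph P W Aa Bb j).
Proof. intros HE HC Hne HS Hlt HR. pose proof (idx_lt_neq _ _ Hlt) as Hab.
  pose proof (alph_pos P W Aa Bb j HE Hab) as Hal. set (al := alph P W Aa Bb j) in *.
  set (A := Aj P W Aa j). set (B := Aj P W Bb j).
  assert (Hr : forall t, rr P W Aa Bb j t = seg A B (t / al)) by reflexivity.
  split; [|split; [|split; [|split]]].
  - intros s t _ _ E. pose proof (rr_dist P W Aa Bb j s t HE Hab). rewrite E, edist_refl in H.
    revert H; split_Rabs; lra.
  - exists (fun _ => (fst B - fst A) / al), (fun _ => (snd B - snd A) / al).
    split; [|split; [|split; [|split]]].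
    + intros t _ e He. exists 1. split; [lra|]. intros s _ Hst _. rewrite !Hr. unfold seg; cbn [fst snd].
      replace (((1 - s / al) * fst A + s / al * fst B - ((1 - t / al) * fst A + t / al * fst B)) / (s - t) -
        (fst B - fst A) / al) with 0 by (field; split; lra). rewrite Rabs_R0. lra.
    + intros t _ e He. exists 1. split; [lra|]. intros s _ Hst _. rewrite !Hr. unfold seg; cbn [fst snd].
      replace (((1 - s / al) * snd A + s / al * snd B - ((1 - t / al) * snd A + t / al * snd B)) / (s - t) -
        (snd B - snd A) / al) with 0 by (field; split; lra). rewrite Rabs_R0. lra.
    + intros t _ e He. exists 1. split; [lra|]. intros. rewrite Rminus_diag, Rabs_R0. lra.
    + intros t _ e He. exists 1. split; [lra|]. intros. rewrite Rminus_diag, Rabs_R0. lra.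
    + intros t _. assert (Ha2 : al ^ 2 = (fst A - fst B) ^ 2 + (snd A - snd B) ^ 2).
      { unfold al. rewrite alph_eq. unfold edist. apply pow2_sqrt. apply Rplus_le_le_0_compat; apply pow2_ge_0. }
      apply Rmult_eq_reg_r with (al^2); [|nra]. field_simplify; [|lra]. rewrite Ha2. ring.
  - intros x. rewrite (HR x), cell_edge_segset. fold A B. split.
    + intros [u [Hu ->]]. exists (u * al). split; [nra|]. rewrite Hr. f_equal. field; lra.
    + intros [t [Ht <-]]. exists (t / al). split; [|apply Hr]. split.
      apply Rmult_le_pos; [lra|left; apply Rinv_0_lt_compat; lra].
      apply Rmult_le_reg_r with al; auto. unfold Rdiv. rewrite Rmult_assoc, Rinv_l by lra. lra.
  - intros t Ht. apply (K_edge P K (W j) (Aa j) (Bb j)); auto. apply cell_edge_segset. fold A B.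
    exists (t / al). split; [|apply Hr]. split.
      apply Rmult_le_pos; [lra|left; apply Rinv_0_lt_compat; lra].
      apply Rmult_le_reg_r with al; auto. unfold Rdiv. rewrite Rmult_assoc, Rinv_l by lra. lra.
  - replace al with (al - 0) at 2 by ring. apply iso_length. lra. intros; apply rr_dist; auto. Qed.

Lemma closure_mono (A B : pt -> Prop) x : (forall y, A y -> B y) -> closure A x -> closure B x.
Proof. intros H Hc e He. destruct (Hc e He) as [y [Hy Hd]]. eauto. Qed.

Lemma axiom1_closure P K (Rc : nat -> pt -> Prop) : equilateral P -> compact_set K -> (exists x, K x) -> self_similar P K ->
  (forall j, exists w a b, idx_lt a b /\ set_eq (Rc j) (cell_edge P w a b)) ->
  (forall w a b, idx_lt a b -> exists! j, set_eq (Rc j) (cell_edge P w a b)) ->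
  set_eq K (closure (fun x => exists j, Rc j x)).
Proof. intros HE HC Hne HS H1 H2 x. split.
  - intros Hx e He. destruct (K_approx P K HC HS) as [M [HM HA]].
    destruct (h_smallC e M He HM) as [n Hn]. destruct (HA x n Hx) as [w [Hl Hd]].
    exists (Fw P w (P i1)). split; [|lra].
    destruct (H2 w i1 i2 I) as [j [Hj _]]. exists j. apply Hj.
    exists 0. split; [lra|]. change (Fw P w (P i1) = Fw P w (seg (P i1) (P i2) 0)). rewrite seg0; auto.
  - intros Hx. apply K_closed; auto. revert Hx. apply closure_mono.
    intros y [j Hj]. destruct (H1 j) as [w [a [b [_ Hw]]]]. apply (K_edge P K w a b); auto. apply Hw; auto. Qed.

Lemma axiom1_cv P (Rc : nat -> pt -> Prop) W Aa Bb : equilateral P ->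
  (forall j, idx_lt (Aa j) (Bb j) /\ set_eq (Rc j) (cell_edge P (W j) (Aa j) (Bb j))) ->
  (forall w a b, idx_lt a b -> exists! j, set_eq (Rc j) (cell_edge P w a b)) ->
  (forall j w a b w' a' b',
     set_eq (Rc j) (cell_edge P w a b) ->
     set_eq (Rc (S j)) (cell_edge P w' a' b') ->
     edge_length P w' a' b' <= edge_length P w a b) ->
  Un_cv (alph P W Aa Bb) 0.
Proof. intros HE HW H2 H3 e He.
  assert (Hmon : forall j, alph P W Aa Bb (S j) <= alph P W Aa Bb j).
  { intros j. unfold alph. apply (H3 j); apply HW. }
  destruct (h_smallC e (side P) He) as [n Hn]. left; apply side_pos; auto.
  destruct (H2 (repeat i1 n) i1 i2 I) as [j0 [Hj0 _]].
  assert (Ha : alph P W Aa Bb (S j0) <= h n * side P).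
  { unfold alph. rewrite <- (repeat_length i1 n). rewrite <- (edge_length_eq P (repeat i1 n) i1 i2) by (auto; discriminate).
    apply H3 with (j := j0); auto. apply HW. }
  exists (S j0). intros m Hm. unfold Rdist. rewrite Rminus_0_r.
  assert (alph P W Aa Bb m <= alph P W Aa Bb (S j0)).
  { induction Hm. lra. pose proof (Hmon m). lra. }
  pose proof (alph_pos P W Aa Bb m HE (idx_lt_neq _ _ (proj1 (HW m)))).
  rewrite Rabs_pos_eq by lra. lra. Qed.

Definition ell (Z : nat -> pt) k := edist (Z k) (Z (S k)).
Definition TT (Z : nat -> pt) k := psum (ell Z) k.
Definition seg_at (Z : nat -> pt) k t := seg (Z k) (Z (S k)) ((t - TT Z k) / ell Z k).

Definition gcurve (Z : nat -> pt) (q : pt) (t : R) : pt :=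
  match excluded_middle_informative (exists k, TT Z k <= t < TT Z (S k)) with
  | left H => seg_at Z (proj1_sig (constructive_indefinite_description _ H)) t
  | right _ => q
  end.

Lemma TT_S Z k : TT Z (S k) = TT Z k + ell Z k.
Proof. reflexivity. Qed.
Lemma TT_0 Z : TT Z 0 = 0.
Proof. reflexivity. Qed.
Lemma ell_ge0 Z k : 0 <= ell Z k.
Proof. apply edist_ge0. Qed.
Lemma TT_mono Z j k : (j <= k)%nat -> TT Z j <= TT Z k.
Proof. induction 1. lra. rewrite TT_S. pose proof (ell_ge0 Z m). lra. Qed.
Lemma TT_ge0 Z k : 0 <= TT Z k.
Proof. rewrite <- (TT_0 Z). apply TT_mono. lia. Qed.

Lemma TT_interval_unique Z k k' t : TT Z k <= t < TT Z (S k) -> TT Z k' <= t < TT Z (S k') -> k = k'.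
Proof. intros H H'. destruct (Nat.lt_trichotomy k k') as [Hl|[E|Hl]]; auto.
  - pose proof (TT_mono Z (S k) k' Hl). lra.
  - pose proof (TT_mono Z (S k') k Hl). lra. Qed.

Lemma g_in Z q k t : TT Z k <= t < TT Z (S k) -> gcurve Z q t = seg_at Z k t.
Proof. intros H. unfold gcurve. destruct (excluded_middle_informative _) as [H'|H'].
  - destruct (constructive_indefinite_description _ H') as [k' Hk']. simpl.
    rewrite (TT_interval_unique Z k' k t); auto.
  - exfalso; eauto. Qed.

Lemma g_out Z q t : ~ (exists k, TT Z k <= t < TT Z (S k)) -> gcurve Z q t = q.
Proof. intros H. unfold gcurve. destruct (excluded_middle_informative _); tauto. Qed.

Lemma ell0_eq Z k : ell Z k = 0 -> Z (S k) = Z k.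
Proof. intros H. symmetry. apply edist_eq0. auto. Qed.

Definition conv_to (Z : nat -> pt) (q : pt) := forall e, 0 < e -> exists M, forall k, (M <= k)%nat -> edist (Z k) q < e.

Lemma g_T Z q k : conv_to Z q -> gcurve Z q (TT Z k) = Z k.
Proof. intros Hc. destruct (classic (exists j, TT Z j <= TT Z k < TT Z (S j))) as [[j Hj]|Hn].
  - rewrite (g_in Z q j) by auto.
    assert (Hjk : (k <= j)%nat). { destruct (Compare_dec.le_lt_dec k j); auto. pose proof (TT_mono Z (S j) k l). lra. }
    pose proof (TT_mono Z k j Hjk).
    assert (HT : TT Z j = TT Z k) by lra.
    assert (HZ : forall d, (k + d <= j)%nat -> Z (k + d)%nat = Z k /\ TT Z (k+d) = TT Z k).
    { induction d; intros Hd. rewrite Nat.add_0_r; auto.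
      destruct IHd as [IH1 IH2]; [lia|]. replace (k + S d)%nat with (S (k + d)) by lia.
      pose proof (TT_mono Z (S (k+d)) j ltac:(lia)). rewrite TT_S in *. pose proof (ell_ge0 Z (k+d)).
      assert (ell Z (k+d) = 0) by lra. rewrite ell0_eq; auto. split; auto. lra. }
    destruct (HZ (j - k)%nat ltac:(lia)) as [E1 _]. replace (k + (j - k))%nat with j in E1 by lia.
    unfold seg_at. rewrite HT, Rminus_diag. unfold Rdiv. rewrite Rmult_0_l, seg0. auto.
  - rewrite g_out by auto.
    assert (HZ : forall d, Z (k + d)%nat = Z k /\ TT Z (k+d) = TT Z k).
    { induction d. rewrite Nat.add_0_r; auto. destruct IHd as [IH1 IH2].
      replace (k + S d)%nat with (S (k + d)) by lia. rewrite TT_S.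
      assert (ell Z (k+d) = 0).
      { destruct (ell_ge0 Z (k+d)); auto. exfalso. apply Hn. exists (k+d)%nat. rewrite TT_S. lra. }
      rewrite ell0_eq; auto. split; auto. lra. }
    symmetry. apply edist_eq0. destruct (edist_ge0 (Z k) q); auto. exfalso.
    destruct (Hc _ H) as [M HM]. specialize (HM (k + M)%nat ltac:(lia)). rewrite (proj1 (HZ M)) in HM. lra. Qed.

Lemma seg_at_T Z k : 0 < ell Z k -> seg_at Z k (TT Z (S k)) = Z (S k).
Proof. intros H. unfold seg_at. rewrite TT_S. replace ((TT Z k + ell Z k - TT Z k) / ell Z k) with 1 by (field; lra).
  apply seg1. Qed.

Lemma g_lin Z q k t : conv_to Z q -> 0 < ell Z k -> TT Z k <= t <= TT Z (S k) -> gcurve Z q t = seg_at Z k t.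
Proof. intros Hc Hl [H1 H2]. destruct H2 as [H2|H2]. apply g_in; lra.
  subst. rewrite g_T by auto. symmetry; apply seg_at_T; auto. Qed.

Lemma seg_at_d1 Z k t : 0 < ell Z k -> TT Z k <= t <= TT Z (S k) -> edist (seg_at Z k t) (Z k) = t - TT Z k.
Proof. intros Hl Ht. unfold seg_at. rewrite edist_seg. rewrite edist_sym. fold (ell Z k).
  rewrite Rabs_pos_eq. field. lra. apply Rmult_le_pos. lra. left; apply Rinv_0_lt_compat; auto. Qed.

Lemma seg_at_d2 Z k t : 0 < ell Z k -> TT Z k <= t <= TT Z (S k) -> edist (seg_at Z k t) (Z (S k)) = TT Z (S k) - t.
Proof. intros Hl Ht. unfold seg_at. rewrite seg_sym, edist_seg. fold (ell Z k). rewrite TT_S in *.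
  rewrite Rabs_pos_eq. field. lra. apply Rmult_le_reg_r with (ell Z k); auto. field_simplify; lra. Qed.

Lemma seg_at_dd Z k s t : 0 < ell Z k -> edist (seg_at Z k s) (seg_at Z k t) = Rabs (s - t).
Proof. intros Hl. unfold seg_at. rewrite seg_dist. fold (ell Z k).
  replace ((s - TT Z k) / ell Z k - (t - TT Z k) / ell Z k) with ((s - t) / ell Z k) by (field; lra).
  unfold Rdiv. rewrite Rabs_mult, Rabs_inv, (Rabs_pos_eq (ell Z k)) by lra. field. lra. Qed.

Lemma Z_chain Z j k : (j <= k)%nat -> edist (Z j) (Z k) <= TT Z k - TT Z j.
Proof. induction 1. rewrite edist_refl; lra. pose proof (edist_tri (Z j) (Z m) (Z (S m))). rewrite TT_S. fold (ell Z m) in H0. lra. Qed.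

Lemma locate Z L t : (forall e, 0 < e -> exists M, L - TT Z M < e) -> 0 <= t < L ->
  exists k, TT Z k <= t < TT Z (S k).
Proof. intros HL Ht. destruct (HL (L - t)) as [M HM]; [lra|].
  assert (forall n, t < TT Z n -> exists k, TT Z k <= t < TT Z (S k)).
  { induction n; intros Hn. rewrite TT_0 in Hn; lra. destruct (Rlt_le_dec t (TT Z n)); auto. exists n; lra. }
  apply (H M). lra. Qed.



Lemma g_L Z q L : (forall k, TT Z k <= L) -> gcurve Z q L = q.
Proof. intros HLb. apply g_out. intros [k Hk]. specialize (HLb (S k)). lra. Qed.

Lemma ell_pos_of Z j s : TT Z j <= s < TT Z (S j) -> 0 < ell Z j.
Proof. rewrite TT_S. intros. lra. Qed.

Lemma dist_to_Z Z q j k s : TT Z j <= s < TT Z (S j) -> (S j <= k)%nat ->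
  edist (gcurve Z q s) (Z k) <= TT Z k - s.
Proof. intros Hs Hk. pose proof (ell_pos_of Z j s Hs). rewrite (g_in Z q j) by auto.
  pose proof (seg_at_d2 Z j s H ltac:(lra)). pose proof (Z_chain Z (S j) k Hk).
  pose proof (edist_tri (seg_at Z j s) (Z (S j)) (Z k)). lra. Qed.

Lemma lip_lt Z q L s t : conv_to Z q -> (forall e, 0 < e -> exists M, L - TT Z M < e) ->
  0 <= s <= t -> t < L -> edist (gcurve Z q s) (gcurve Z q t) <= t - s.
Proof. intros Hc HL Hst HtL. destruct (locate Z L s HL ltac:(lra)) as [j Hj].
  destruct (locate Z L t HL ltac:(lra)) as [k Hk].
  destruct (Nat.lt_trichotomy j k) as [Hjk|[E|Hjk]].
  - pose proof (dist_to_Z Z q j k s Hj Hjk). pose proof (ell_pos_of Z k t Hk).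
    rewrite (g_in Z q k t Hk). pose proof (seg_at_d1 Z k t H0 ltac:(lra)).
    rewrite (g_in Z q j s Hj) in *. pose proof (edist_tri (seg_at Z j s) (Z k) (seg_at Z k t)).
    rewrite edist_sym in H1. lra.
  - subst. rewrite !(g_in Z q k) by auto. rewrite seg_at_dd by (eapply ell_pos_of; eauto).
    rewrite Rabs_left1; lra.
  - pose proof (TT_mono Z (S k) j Hjk). lra. Qed.

Lemma lip_L Z q L s : conv_to Z q -> (forall k, TT Z k <= L) -> (forall e, 0 < e -> exists M, L - TT Z M < e) ->
  0 <= s <= L -> edist (gcurve Z q s) q <= L - s.
Proof. intros Hc HLb HL Hs. destruct (Req_dec s L) as [->|Hne].
  - rewrite g_L, edist_refl by auto. lra.
  - destruct (locate Z L s HL ltac:(lra)) as [j Hj].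
    apply Rnot_lt_le. intros Hlt. set (e := edist (gcurve Z q s) q - (L - s)).
    destruct (Hc (e/2)) as [M HM]. unfold e; lra.
    pose proof (dist_to_Z Z q j (S j + M) s Hj ltac:(lia)). specialize (HM (S j + M)%nat ltac:(lia)).
    pose proof (HLb (S j + M)%nat). pose proof (edist_tri (gcurve Z q s) (Z (S j + M)%nat) q).
    unfold e in *. lra. Qed.

Lemma lip_all Z q L s t : conv_to Z q -> (forall k, TT Z k <= L) -> (forall e, 0 < e -> exists M, L - TT Z M < e) ->
  0 <= s <= L -> 0 <= t <= L -> edist (gcurve Z q s) (gcurve Z q t) <= Rabs (s - t).
Proof. intros Hc HLb HL Hs Ht.
  assert (forall s t, 0 <= s <= t -> t <= L -> edist (gcurve Z q s) (gcurve Z q t) <= t - s).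
  { intros s' t' H1 H2. destruct (Req_dec t' L) as [->|Hne].
    - rewrite (g_L Z q L HLb). apply lip_L; auto.
    - apply lip_lt with L; auto. lra. }
  destruct (Rle_dec s t). rewrite Rabs_left1 by lra. replace (-(s-t)) with (t - s) by ring. apply H; lra.
  rewrite edist_sym, Rabs_pos_eq by lra. apply H; lra. Qed.

Lemma poly_range (s : nat -> R) a b N : s O = a -> s N = b -> (forall k, (k < N)%nat -> s k <= s (S k)) ->
  forall k, (k <= N)%nat -> a <= s k <= b.
Proof. intros H0 HN Hm k Hk. split.
  - revert Hk. induction k; intros Hk. lra. pose proof (Hm k ltac:(lia)). pose proof (IHk ltac:(lia)). lra.
  - assert (Hd : forall d k, (k + d = N)%nat -> s k <= b).
    { induction d; intros k' Hk'. rewrite Nat.add_0_r in Hk'; subst; lra.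
      pose proof (Hm k' ltac:(lia)). pose proof (IHd (S k') ltac:(lia)). lra. }
    apply (Hd (N - k)%nat k); lia. Qed.

Lemma lip_length (g : R -> pt) a b : a <= b ->
  (forall s t, a <= s <= b -> a <= t <= b -> edist (g s) (g t) <= Rabs (s - t)) ->
  forall v, polygon_lengths g a b v -> v <= b - a.
Proof. intros Hab Hg v [N [s [H0 [HN [Hm ->]]]]]. rewrite <- H0, <- HN, <- psum_tel.
  apply psum_le. intros k Hk. pose proof (poly_range s a b N H0 HN Hm k ltac:(lia)).
  pose proof (poly_range s a b N H0 HN Hm (S k) ltac:(lia)). specialize (Hm k Hk).
  rewrite <- Rabs_pos_eq by lra. rewrite Rabs_minus_sym. apply Hg; lra. Qed.

Lemma gcurve_length Z q L : conv_to Z q -> (forall k, TT Z k <= L) -> (forall e, 0 < e -> exists M, L - TT Z M < e) ->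
  is_length (gcurve Z q) 0 L L.
Proof. intros Hc HLb HL. assert (HL0 : 0 <= L) by (pose proof (HLb O); rewrite TT_0 in H; auto).
  split.
  - intros v Hv. replace L with (L - 0) by ring. apply (lip_length (gcurve Z q)); auto.
    intros; apply lip_all with L; auto.
  - intros u Hu. apply Rnot_lt_le. intros Hlt. destruct (HL (L - u)) as [k Hk]; [lra|].
    set (sq := fun i => if Nat.leb i k then TT Z i else L).
    assert (Hsk : forall i, (i <= k)%nat -> sq i = TT Z i).
    { intros i Hi. unfold sq. apply Nat.leb_le in Hi. rewrite Hi. auto. }
    assert (HsS : sq (S k) = L).
    { unfold sq. assert (Nat.leb (S k) k = false) by (apply Nat.leb_gt; lia). rewrite H. auto. }
    assert (polygon_lengths (gcurve Z q) 0 L (TT Z k + edist (Z k) q)).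
    { exists (S k), sq. split; [rewrite Hsk by lia; apply TT_0|]. split; [auto|]. split.
      - intros i Hi. rewrite Hsk by lia. destruct (Nat.eq_dec i k) as [->|Hne].
        rewrite HsS; auto. rewrite Hsk by lia. apply TT_mono; lia.
      - simpl psum. rewrite Hsk by lia. rewrite HsS. rewrite g_T, g_L by auto. f_equal.
        apply psum_ext. intros i Hi. rewrite !Hsk by lia. rewrite !g_T by auto. reflexivity. }
    specialize (Hu _ H). pose proof (edist_ge0 (Z k) q). lra.
Qed.

Lemma gcurve_curve (X : pt -> Prop) Z q L : conv_to Z q -> (forall k, TT Z k <= L) ->
  (forall e, 0 < e -> exists M, L - TT Z M < e) -> X q ->
  (forall k u, 0 <= u <= 1 -> X (seg (Z k) (Z (S k)) u)) ->
  is_curve X (gcurve Z q) 0 L (Z O) q.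
Proof. intros Hc HLb HL Hq HX. assert (HL0 : 0 <= L) by (pose proof (HLb O); rewrite TT_0 in H; auto).
  split; [auto|]. split. rewrite <- (TT_0 Z) at 1. apply g_T; auto. split. apply g_L; auto. split.
  - intros t Ht. unfold gcurve. destruct (excluded_middle_informative _) as [H|H]; auto.
    destruct (constructive_indefinite_description _ H) as [k Hk]. simpl. unfold seg_at. apply HX.
    pose proof (ell_pos_of Z k t Hk). rewrite TT_S in Hk. split.
    apply Rmult_le_pos. lra. left; apply Rinv_0_lt_compat; auto.
    apply Rmult_le_reg_r with (ell Z k); auto. field_simplify; lra.
  - intros t Ht e He. exists e. split; auto. intros s Hs Hst.
    pose proof (lip_all Z q L s t Hc HLb HL Hs Ht). lra. Qed.

Lemma gcurve_image Z q k : conv_to Z q -> 0 < ell Z k ->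
  set_eq (segset (Z k) (Z (S k))) (image_on (gcurve Z q) (TT Z k) (TT Z (S k))).
Proof. intros Hc Hl x. split.
  - intros [u [Hu ->]]. exists (TT Z k + u * ell Z k). split. rewrite TT_S; nra.
    rewrite (g_lin Z q k) by (auto; rewrite TT_S; nra). unfold seg_at. f_equal. field. lra.
  - intros [t [Ht <-]]. rewrite (g_lin Z q k) by auto. unfold seg_at. exists ((t - TT Z k) / ell Z k).
    split; auto. rewrite TT_S in Ht. split. apply Rmult_le_pos. lra. left; apply Rinv_0_lt_compat; auto.
    apply Rmult_le_reg_r with (ell Z k); auto. field_simplify; lra. Qed.

Lemma exists_least (Pn : nat -> Prop) : (exists n, Pn n) -> exists n, Pn n /\ forall m, (m < n)%nat -> ~ Pn m.
Proof. intros [n Hn]. revert Hn. induction n as [n IH] using (well_founded_induction Wf_nat.lt_wf). intros Hn.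
  destruct (classic (exists m, (m < n)%nat /\ Pn m)) as [[m [Hm Pm]]|Hno].
  - apply (IH m Hm Pm).
  - exists n. split; auto. intros m Hm Pm. apply Hno; eauto. Qed.

Lemma next_exists Z K : (exists k, (K <= k)%nat /\ 0 < ell Z k) ->
  exists k, (K <= k)%nat /\ 0 < ell Z k /\ TT Z k = TT Z K.
Proof. intros H. destruct (exists_least (fun k => (K <= k)%nat /\ 0 < ell Z k) H) as [k [[Hk1 Hk2] Hmin]].
  exists k. split; auto. split; auto.
  assert (forall d, (K + d <= k)%nat -> TT Z (K + d) = TT Z K).
  { induction d; intros Hd. rewrite Nat.add_0_r; auto. replace (K + S d)%nat with (S (K + d)) by lia.
    rewrite TT_S, IHd by lia. assert (ell Z (K + d) = 0).
    { destruct (ell_ge0 Z (K+d)); auto. exfalso. apply (Hmin (K + d)%nat); [lia|split; auto; lia]. }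
    lra. }
  replace k with (K + (k - K))%nat by lia. apply H0. lia. Qed.

Lemma concat_extract (Rc : nat -> pt -> Prop) alpha r Z q L : conv_to Z q -> (forall k, TT Z k <= L) ->
  (forall e, 0 < e -> exists M, L - TT Z M < e) ->
  (forall k, 0 < ell Z k -> exists j, traverses Rc alpha r (gcurve Z q) (TT Z k) (TT Z (S k)) j) ->
  concat_of_curves Rc alpha r (gcurve Z q) 0 L q.
Proof. intros Hc HLb HL Htr.
  destruct (classic (forall K, exists k, (K <= k)%nat /\ 0 < ell Z k)) as [Hinf|Hfin].
  - right.
    set (nx := fun K => proj1_sig (constructive_indefinite_description _ (next_exists Z K (Hinf K)))).
    assert (Hnx : forall K, (K <= nx K)%nat /\ 0 < ell Z (nx K) /\ TT Z (nx K) = TT Z K).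
    { intros K. unfold nx. destruct (constructive_indefinite_description _ _). simpl. auto. }
    set (sg := fix sg j := match j with O => nx O | S j' => nx (S (sg j')) end).
    assert (Hsg0 : sg O = nx O) by reflexivity.
    assert (HsgS : forall j, sg (S j) = nx (S (sg j))) by reflexivity.
    assert (Hsg_ge : forall j, (j <= sg j)%nat).
    { induction j. lia. rewrite HsgS. pose proof (Hnx (S (sg j))). lia. }
    set (jsf := fun k => match excluded_middle_informative (0 < ell Z k) with
             | left H => proj1_sig (constructive_indefinite_description _ (Htr k H)) | right _ => O end).
    assert (Hjs : forall k, 0 < ell Z k -> traverses Rc alpha r (gcurve Z q) (TT Z k) (TT Z (S k)) (jsf k)).
    { intros k Hk. unfold jsf. destruct (excluded_middle_informative _); [|tauto].
      destruct (constructive_indefinite_description _ _). simpl. auto. }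
    exists (fun j => TT Z (sg j)), (fun j => jsf (sg j)). split; [|split].
    + rewrite Hsg0. destruct (Hnx O) as [_ [_ E]]. rewrite E. apply TT_0.
    + intros k. rewrite HsgS. destruct (Hnx (S (sg k))) as [_ [_ E]]. rewrite E.
      destruct (Hnx (sg k)) as [_ [Hp _]].
      assert (Hp' : 0 < ell Z (sg k)) by (destruct k; [rewrite Hsg0|rewrite HsgS]; apply Hnx).
      split; [split|]. rewrite TT_S; lra. apply HLb. apply Hjs; auto.
    + intros e He. destruct (Hc e He) as [M HM]. exists M. intros k Hk. rewrite g_T by auto.
      apply HM. pose proof (Hsg_ge k). lia.
  - left. apply not_all_ex_not in Hfin. destruct Hfin as [K HK].
    assert (Hz : forall k, (K <= k)%nat -> ell Z k = 0).
    { intros k Hk. destruct (ell_ge0 Z k); auto. exfalso; eauto. }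
    assert (HTK : forall d, TT Z (K + d) = TT Z K).
    { induction d. rewrite Nat.add_0_r; auto. replace (K + S d)%nat with (S (K + d)) by lia.
      rewrite TT_S, IHd, Hz by lia. ring. }
    assert (HLK : L = TT Z K).
    { apply Rle_antisym; [|apply HLb]. apply Rnot_lt_le. intros Hlt. destruct (HL (L - TT Z K)) as [M HM]; [lra|].
      pose proof (TT_mono Z M (K + M) ltac:(lia)). rewrite HTK in H. lra. }
    assert (Hfinite : forall n, exists N t js, t O = 0 /\ t N = TT Z n /\
      forall k, (k < N)%nat -> t k < t (S k) /\ traverses Rc alpha r (gcurve Z q) (t k) (t (S k)) (js k)).
    { induction n.
      - exists O, (fun _ => 0), (fun _ => O). split; auto. split; auto. intros; lia.
      - destruct IHn as [N [t [js [H0 [HN Hk]]]]]. destruct (ell_ge0 Z n) as [Hp|Hz0].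
        + destruct (Htr n Hp) as [j Hj].
          exists (S N), (fun k => if Nat.eqb k (S N) then TT Z (S n) else t k),
            (fun k => if Nat.eqb k N then j else js k). simpl. split; auto.
          split. rewrite Nat.eqb_refl. auto. intros k Hkl.
          assert (E : Nat.eqb k (S N) = false) by (apply Nat.eqb_neq; lia). rewrite E.
          destruct (Nat.eq_dec k N) as [->|Hne].
          * rewrite Nat.eqb_refl. simpl. rewrite HN. split. rewrite TT_S; lra. auto.
          * assert (E2 : Nat.eqb (S k) (S N) = false) by (apply Nat.eqb_neq; lia). try rewrite E2; simpl.
            assert (E3 : Nat.eqb k N = false) by (apply Nat.eqb_neq; lia). rewrite ?E3. apply Hk. lia.
        + exists N, t, js. split; auto. split; auto. rewrite TT_S, <- Hz0. rewrite HN; ring. }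
    destruct (Hfinite K) as [N [t [js [H0 [HN Hk]]]]]. exists N, t, js. split; auto. split. lra.
    split; auto. apply g_L; auto. Qed.

Fixpoint knat (i : idx) (w : list idx) : nat :=
  match w with nil => O | j :: w' => (knat i w' + if idx_eq_dec i j then 2 ^ length w' else 0)%nat end.

Lemma h_pow2 n : INR (2 ^ n) * h n = 1.
Proof. unfold h. rewrite pow_INR. replace (INR 2) with 2 by (simpl; ring). rewrite <- Rpow_mult_distr. replace (2 * / 2) with 1 by field. apply pow1. Qed.

Lemma kap_knat i w : kap i w = INR (knat i w) * h (length w).
Proof. induction w as [|j w IH]; simpl. lra. rewrite IH, plus_INR, h_S. unfold dlt.
  destruct (idx_eq_dec i j). pose proof (h_pow2 (length w)). lra. simpl. lra. Qed.

Lemma knat_sum w : (knat i1 w + knat i2 w + knat i3 w + 1 = 2 ^ length w)%nat.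
Proof. induction w as [|j w IH]; simpl. auto.
  destruct j; simpl; repeat (destruct (idx_eq_dec _ _); try discriminate); lia. Qed.

Lemma lam_corner P w i j : equilateral P -> lam P i (Fw P w (P j)) = h (length w) * dlt i j + kap i w.
Proof. intros HE. rewrite lam_Fw, lam_P; auto. Qed.

Lemma lam_cell P K w y i : equilateral P -> compact_set K -> self_similar P K -> K y ->
  kap i w <= lam P i (Fw P w y).
Proof. intros HE HC HS Hy. rewrite lam_Fw by auto. pose proof (K_tri P K y i HE HC HS Hy).
  pose proof (h_pos (length w)). nra. Qed.

Definition Qf (a b : R) := a^2 + b^2 + a*b.
Definition N1 (a b : R) := Rabs (a + b) + Rabs a + Rabs b.

Lemma Q_le_N1 a b : Qf a b <= N1 a b ^ 2 / 4.
Proof. unfold Qf, N1. split_Rabs; nra. Qed.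
Lemma Q_ge_N1 a b : 3/16 * N1 a b ^ 2 <= Qf a b.
Proof. unfold Qf, N1. pose proof (pow2_ge_0 (a-b)). pose proof (pow2_ge_0 (a+2*b)). pose proof (pow2_ge_0 (2*a+b)).
  split_Rabs; nra. Qed.

Lemma edist_sq_Q P x y : equilateral P -> edist x y ^ 2 = s2 P * Qf (lam2 P x - lam2 P y) (lam3 P x - lam3 P y).
Proof. intros HE. rewrite (edist_sq P) by auto. reflexivity. Qed.

Lemma N1_lam P x y : N1 (lam2 P x - lam2 P y) (lam3 P x - lam3 P y) =
  Rabs (lam P i1 x - lam P i1 y) + Rabs (lam P i2 x - lam P i2 y) + Rabs (lam P i3 x - lam P i3 y).
Proof. unfold N1. simpl.
  replace (1 - lam2 P x - lam3 P x - (1 - lam2 P y - lam3 P y)) with (- (lam2 P x - lam2 P y + (lam3 P x - lam3 P y))) by ring.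
  rewrite Rabs_Ropp. auto. Qed.

Lemma side_sq P : equilateral P -> side P ^ 2 = s2 P.
Proof. intros HE. unfold side. rewrite (edist_sq_Q P) by auto. destruct (lam_p1 P HE) as [A B].
  pose proof (lam_P P i2 i2 HE). pose proof (lam_P P i3 i2 HE). simpl in *. unfold dlt in *.
  destruct (idx_eq_dec i2 i2); [|congruence]. destruct (idx_eq_dec i3 i2); [discriminate|].
  rewrite A, B, H, H0. unfold Qf. ring. Qed.

Lemma coord_b a b ka kb : ka <= a -> kb <= b -> Rabs (a - Rmax ka kb) - Rabs (a - b) <= b - Rmax ka kb.
Proof. intros. unfold Rmax. destruct (Rle_dec ka kb); split_Rabs; lra. Qed.
Lemma coord_c a b ka kb : ka <= a -> kb <= b -> 2 * Rmax ka kb - a - b <= Rabs (a - b).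
Proof. intros. unfold Rmax. destruct (Rle_dec ka kb); split_Rabs; lra. Qed.

Lemma Rmax_INR m n : Rmax (INR m) (INR n) = INR (Nat.max m n).
Proof. unfold Rmax. destruct (Rle_dec (INR m) (INR n)).
  - apply INR_le in r. rewrite Nat.max_r; auto.
  - assert (n <= m)%nat. { apply INR_le. lra. } rewrite Nat.max_l; auto. Qed.

Lemma coord_b' a b ka kb m : ka <= a -> kb <= b -> ka <= m -> kb <= m -> (m = ka \/ m = kb) ->
  Rabs (a - m) - Rabs (a - b) <= b - m.
Proof. intros H1 H2 H3 H4 [E|E]; subst; split_Rabs; lra. Qed.

Lemma max_sel (k k' : idx -> nat) : exists j, forall i,
  (Nat.max (k i1) (k' i1) + Nat.max (k i2) (k' i2) + Nat.max (k i3) (k' i3) = k i1 + k i2 + k i3 + 1)%nat ->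
  (Nat.max (k i) (k' i) = k i + if idx_eq_dec i j then 1 else 0)%nat.
Proof. destruct (Nat.le_gt_cases (Nat.max (k i1) (k' i1)) (k i1)).
  - destruct (Nat.le_gt_cases (Nat.max (k i2) (k' i2)) (k i2)).
    + exists i3. intros i Hs. destruct i; simpl; lia.
    + exists i2. intros i Hs. destruct i; simpl; lia.
  - exists i1. intros i Hs. destruct i; simpl; lia. Qed.

Lemma dlt_INR i j : dlt i j = INR (if idx_eq_dec i j then 1 else 0)%nat.
Proof. unfold dlt. destruct (idx_eq_dec i j); simpl; auto. Qed.

Lemma cell_rel P K w w' y y' : equilateral P -> compact_set K -> self_similar P K -> K y -> K y' ->
  length w = length w' ->
  (forall j, Fw P w (P j) = Fw P w' (P j)) \/
  (exists j j', Fw P w (P j) = Fw P w' (P j') /\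
     edist (Fw P w y) (Fw P w (P j)) ^ 2 <= 4/3 * edist (Fw P w y) (Fw P w' y') ^ 2 /\
     edist (Fw P w' y') (Fw P w (P j)) ^ 2 <= 4/3 * edist (Fw P w y) (Fw P w' y') ^ 2) \/
  (3/4 * (h (length w) * side P) ^ 2 <= edist (Fw P w y) (Fw P w' y') ^ 2).
Proof. intros HE HC HS Hy Hy' Hl.
  set (n := length w). set (z := Fw P w y). set (z' := Fw P w' y').
  set (k := fun i => knat i w). set (k' := fun i => knat i w').
  pose proof (knat_sum w) as Sk. pose proof (knat_sum w') as Sk'. fold n in Sk. rewrite <- Hl in Sk'. fold n in Sk'.
  pose proof (h_pow2 n) as Hp. pose proof (h_pos n) as Hhp.
  assert (Hkap : forall i, kap i w = INR (k i) * h n) by (intros; apply kap_knat).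
  assert (Hkap' : forall i, kap i w' = INR (k' i) * h n) by (intros; rewrite kap_knat, <- Hl; auto).
  assert (Ha : forall i, INR (k i) * h n <= lam P i z) by (intros; rewrite <- Hkap; apply (lam_cell P K); auto).
  assert (Hb : forall i, INR (k' i) * h n <= lam P i z') by (intros; rewrite <- Hkap'; apply (lam_cell P K); auto).
  assert (Hcorner : forall i j, lam P i (Fw P w (P j)) = INR (k i + if idx_eq_dec i j then 1 else 0) * h n).
  { intros. rewrite lam_corner, Hkap, plus_INR, <- dlt_INR by auto. fold n. ring. }
  assert (Hcorner' : forall i j, lam P i (Fw P w' (P j)) = INR (k' i + if idx_eq_dec i j then 1 else 0) * h n).
  { intros. rewrite lam_corner, Hkap', plus_INR, <- dlt_INR by auto. rewrite <- Hl. fold n. ring. }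
  assert (Hpt : forall x x', (forall i, lam P i x = lam P i x') -> x = x').
  { intros x x' Hx. apply (pt_eq_lam P); auto. apply (Hx i2). apply (Hx i3). }
  assert (Hcases : (k i1 = k' i1 /\ k i2 = k' i2 /\ k i3 = k' i3) \/
     (Nat.max (k i1) (k' i1) + Nat.max (k i2) (k' i2) + Nat.max (k i3) (k' i3) = 2 ^ n)%nat \/
     (2 ^ n + 1 <= Nat.max (k i1) (k' i1) + Nat.max (k i2) (k' i2) + Nat.max (k i3) (k' i3))%nat).
  { unfold k, k' in *. lia. }
  destruct Hcases as [[E1 [E2 E3]]|[Hs|Hs]].
  - left. intros j. apply Hpt. intros i. rewrite Hcorner, Hcorner'. destruct i; [rewrite E1|rewrite E2|rewrite E3]; auto.
  - right; left. destruct (max_sel k k') as [j Hj]. destruct (max_sel k' k) as [j' Hj'].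
    assert (Hj2 : forall i, Nat.max (k i) (k' i) = (k i + if idx_eq_dec i j then 1 else 0)%nat).
    { intros i. apply Hj. unfold k, k' in *; lia. }
    assert (Hj2' : forall i, Nat.max (k i) (k' i) = (k' i + if idx_eq_dec i j' then 1 else 0)%nat).
    { intros i. rewrite Nat.max_comm. apply Hj'. unfold k, k' in *; lia. }
    set (v := Fw P w (P j)).
    assert (Hm : forall i, lam P i v = INR (Nat.max (k i) (k' i)) * h n) by (intros; unfold v; rewrite Hcorner, Hj2; auto).
    exists j, j'. split. apply Hpt. intros i. rewrite Hcorner, Hcorner', <- Hj2, <- Hj2'. auto.
    assert (Hmk : forall i, INR (k i) * h n <= lam P i v /\ INR (k' i) * h n <= lam P i v /\
       (lam P i v = INR (k i) * h n \/ lam P i v = INR (k' i) * h n)).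
    { intros i. rewrite Hm. split; [|split].
      apply Rmult_le_compat_r; [lra|apply le_INR; lia]. apply Rmult_le_compat_r; [lra|apply le_INR; lia].
      destruct (Nat.max_spec (k i) (k' i)) as [[_ E]|[_ E]]; rewrite E; auto. }
    assert (HN1a : N1 (lam2 P z - lam2 P v) (lam3 P z - lam3 P v) <= N1 (lam2 P z - lam2 P z') (lam3 P z - lam3 P z')).
    { rewrite !N1_lam. pose proof (lam_sum P z'). pose proof (lam_sum P v).
      destruct (Hmk i1) as [A1 [B1 C1]]. destruct (Hmk i2) as [A2 [B2 C2]]. destruct (Hmk i3) as [A3 [B3 C3]].
      pose proof (coord_b' _ _ _ _ _ (Ha i1) (Hb i1) A1 B1 C1).
      pose proof (coord_b' _ _ _ _ _ (Ha i2) (Hb i2) A2 B2 C2).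
      pose proof (coord_b' _ _ _ _ _ (Ha i3) (Hb i3) A3 B3 C3). lra. }
    assert (HN1b : N1 (lam2 P z' - lam2 P v) (lam3 P z' - lam3 P v) <= N1 (lam2 P z - lam2 P z') (lam3 P z - lam3 P z')).
    { rewrite !N1_lam. pose proof (lam_sum P z). pose proof (lam_sum P v).
      destruct (Hmk i1) as [A1 [B1 C1]]. destruct (Hmk i2) as [A2 [B2 C2]]. destruct (Hmk i3) as [A3 [B3 C3]].
      pose proof (coord_b' _ _ _ _ _ (Hb i1) (Ha i1) B1 A1 (ltac:(destruct C1; [right|left]; auto))).
      pose proof (coord_b' _ _ _ _ _ (Hb i2) (Ha i2) B2 A2 (ltac:(destruct C2; [right|left]; auto))).
      pose proof (coord_b' _ _ _ _ _ (Hb i3) (Ha i3) B3 A3 (ltac:(destruct C3; [right|left]; auto))).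
      rewrite !(Rabs_minus_sym (lam P _ z')) in *. lra. }
    destruct (equi_facts P HE) as [_ [_ Hs2]].
    assert (Hconv : forall x1, N1 (lam2 P x1 - lam2 P v) (lam3 P x1 - lam3 P v) <= N1 (lam2 P z - lam2 P z') (lam3 P z - lam3 P z') ->
       edist x1 v ^ 2 <= 4/3 * edist z z' ^ 2).
    { intros x1 HN. rewrite !(edist_sq_Q P) by auto.
      pose proof (Q_le_N1 (lam2 P x1 - lam2 P v) (lam3 P x1 - lam3 P v)).
      pose proof (Q_ge_N1 (lam2 P z - lam2 P z') (lam3 P z - lam3 P z')).
      set (u1 := N1 (lam2 P x1 - lam2 P v) (lam3 P x1 - lam3 P v)) in *.
      set (u2 := N1 (lam2 P z - lam2 P z') (lam3 P z - lam3 P z')) in *.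
      assert (0 <= u1) by (unfold u1, N1; pose proof (Rabs_pos (lam2 P x1 - lam2 P v + (lam3 P x1 - lam3 P v)));
        pose proof (Rabs_pos (lam2 P x1 - lam2 P v)); pose proof (Rabs_pos (lam3 P x1 - lam3 P v)); lra).
      assert (u1 ^ 2 <= u2 ^ 2) by nra. nra. }
    split; apply Hconv; auto.
  - right; right.
    assert (HN : 2 * h n <= N1 (lam2 P z - lam2 P z') (lam3 P z - lam3 P z')).
    { rewrite N1_lam. pose proof (lam_sum P z). pose proof (lam_sum P z').
      assert (Hc : forall i, 2 * (INR (Nat.max (k i) (k' i)) * h n) - lam P i z - lam P i z' <= Rabs (lam P i z - lam P i z')).
      { intros i. rewrite <- Rmax_INR. rewrite <- (Rmult_comm (h n)), <- RmaxRmult by lra.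
        rewrite !(Rmult_comm (h n)). apply coord_c; auto. }
      pose proof (Hc i1). pose proof (Hc i2). pose proof (Hc i3).
      apply le_INR in Hs. rewrite !plus_INR in Hs. change (INR 1) with 1 in Hs.
      assert (Hsum : (INR (2 ^ n) + 1) * h n <= (INR (Nat.max (k i1) (k' i1)) + INR (Nat.max (k i2) (k' i2)) + INR (Nat.max (k i3) (k' i3))) * h n)
        by (apply Rmult_le_compat_r; lra). lra. }
    rewrite (edist_sq_Q P) by auto. pose proof (Q_ge_N1 (lam2 P z - lam2 P z') (lam3 P z - lam3 P z')).
    rewrite Rpow_mult_distr, side_sq by auto. destruct (equi_facts P HE) as [_ [_ Hs2]].
    fold n. assert (4 * h n ^ 2 <= N1 (lam2 P z - lam2 P z') (lam3 P z - lam3 P z') ^ 2) by nra. nra.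
Qed.

Lemma fst_le_edist u v : Rabs (fst u - fst v) <= edist u v.
Proof. unfold edist. rewrite <- (sqrt_pow2 (Rabs (fst u - fst v))) by apply Rabs_pos. apply sqrt_le_1_alt.
  rewrite <- Rsqr_pow2, <- Rsqr_abs, Rsqr_pow2. pose proof (pow2_ge_0 (snd u - snd v)). lra. Qed.
Lemma snd_le_edist u v : Rabs (snd u - snd v) <= edist u v.
Proof. unfold edist. rewrite <- (sqrt_pow2 (Rabs (snd u - snd v))) by apply Rabs_pos. apply sqrt_le_1_alt.
  rewrite <- Rsqr_pow2, <- Rsqr_abs, Rsqr_pow2. pose proof (pow2_ge_0 (fst u - fst v)). lra. Qed.
Lemma edist_le_sum u v : edist u v <= Rabs (fst u - fst v) + Rabs (snd u - snd v).
Proof. unfold edist. pose proof (Rabs_pos (fst u - fst v)). pose proof (Rabs_pos (snd u - snd v)).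
  rewrite <- (sqrt_pow2 (Rabs (fst u - fst v) + Rabs (snd u - snd v))) by lra.
  apply sqrt_le_1_alt. rewrite <- (pow2_abs (fst u - fst v)), <- (pow2_abs (snd u - snd v)). nra. Qed.

Definition clamp a b t := Rmax a (Rmin b t).
Lemma clamp_in a b t : a <= b -> a <= clamp a b t <= b.
Proof. intros. unfold clamp, Rmax, Rmin. repeat destruct (Rle_dec _ _); lra. Qed.
Lemma clamp_id a b t : a <= t <= b -> clamp a b t = t.
Proof. intros. unfold clamp, Rmax, Rmin. repeat destruct (Rle_dec _ _); lra. Qed.
Lemma clamp_lip a b s t : a <= b -> a <= t <= b -> Rabs (clamp a b s - t) <= Rabs (s - t).
Proof. intros. unfold clamp, Rmax, Rmin. repeat destruct (Rle_dec _ _); split_Rabs; lra. Qed.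

Lemma unif_cont (g : R -> pt) a b : a <= b ->
  (forall t, a <= t <= b -> forall e, 0 < e -> exists d, 0 < d /\
     forall s, a <= s <= b -> Rabs (s - t) < d -> edist (g s) (g t) < e) ->
  forall e, 0 < e -> exists d, 0 < d /\ forall s t, a <= s <= b -> a <= t <= b -> Rabs (s - t) < d -> edist (g s) (g t) < e.
Proof. intros Hab Hc e He.
  assert (Hcp : forall (pr : pt -> R), (forall u v, Rabs (pr u - pr v) <= edist u v) ->
     forall x, a <= x <= b -> continuity_pt (fun t => pr (g (clamp a b t))) x).
  { intros pr Hpr x Hx eps Heps. destruct (Hc x Hx eps Heps) as [d [Hd Hd']]. exists d. split; [lra|].
    intros y [_ Hy]. simpl in *. unfold Rdist in *. rewrite (clamp_id a b x Hx).
    apply Rle_lt_trans with (edist (g (clamp a b y)) (g x)). apply Hpr.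
    apply Hd'. apply clamp_in; auto. pose proof (clamp_lip a b y x Hab Hx). lra. }
  destruct (Heine _ _ (compact_P3 a b) (Hcp fst fst_le_edist) (mkposreal (e/2) ltac:(lra))) as [d1 Hd1].
  destruct (Heine _ _ (compact_P3 a b) (Hcp snd snd_le_edist) (mkposreal (e/2) ltac:(lra))) as [d2 Hd2].
  exists (Rmin d1 d2). split. apply Rmin_pos; apply cond_pos.
  intros s t Hs Ht Hst. specialize (Hd1 s t Hs Ht). specialize (Hd2 s t Hs Ht). simpl in *.
  rewrite !clamp_id in Hd1, Hd2 by auto. pose proof (Rmin_l d1 d2). pose proof (Rmin_r d1 d2).
  pose proof (Hd1 ltac:(lra)). pose proof (Hd2 ltac:(lra)). pose proof (edist_le_sum (g s) (g t)). lra. Qed.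

Definition tcorner P (phi : pt -> R) w r L j z := phi (Fw P w (P j)) + L * Rmax 0 (edist z (Fw P w (P j)) - r).
Definition psiw P phi w r L z := Rmin (Rmin (tcorner P phi w r L i1 z) (tcorner P phi w r L i2 z)) (tcorner P phi w r L i3 z).

Lemma Rmin_lip a b a' b' c : Rabs (a - a') <= c -> Rabs (b - b') <= c -> Rabs (Rmin a b - Rmin a' b') <= c.
Proof. intros. unfold Rmin. repeat destruct (Rle_dec _ _); revert H H0; split_Rabs; lra. Qed.

Lemma edist_rev x y z : Rabs (edist x z - edist y z) <= edist x y.
Proof. pose proof (edist_tri x y z). pose proof (edist_tri y x z). rewrite (edist_sym y x) in H0. split_Rabs; lra. Qed.

Lemma tcorner_lip P phi w r L j z z' : 0 <= L -> Rabs (tcorner P phi w r L j z - tcorner P phi w r L j z') <= L * edist z z'.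
Proof. intros HL. unfold tcorner. pose proof (edist_rev z z' (Fw P w (P j))).
  replace (phi (Fw P w (P j)) + L * Rmax 0 (edist z (Fw P w (P j)) - r) -
   (phi (Fw P w (P j)) + L * Rmax 0 (edist z' (Fw P w (P j)) - r))) with
   (L * (Rmax 0 (edist z (Fw P w (P j)) - r) - Rmax 0 (edist z' (Fw P w (P j)) - r))) by ring.
  rewrite Rabs_mult, Rabs_pos_eq by auto. apply Rmult_le_compat_l; auto.
  unfold Rmax. repeat destruct (Rle_dec _ _); revert H; split_Rabs; lra. Qed.

Lemma psiw_lip P phi w r L z z' : 0 <= L -> Rabs (psiw P phi w r L z - psiw P phi w r L z') <= L * edist z z'.
Proof. intros HL. unfold psiw. repeat apply Rmin_lip; apply tcorner_lip; auto. Qed.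

Lemma corner_dist P w i j : equilateral P -> i <> j -> edist (Fw P w (P i)) (Fw P w (P j)) = h (length w) * side P.
Proof. intros HE Hij. rewrite edist_Fw, side_ab; auto. Qed.

Lemma psiw_corner P phi w r L j z : equilateral P -> 0 <= r ->
  (forall i i', Rabs (phi (Fw P w (P i)) - phi (Fw P w (P i'))) <= h (length w) * side P) ->
  h (length w) * side P <= L * (h (length w) * side P - 2 * r) -> 0 <= L ->
  edist z (Fw P w (P j)) <= r -> psiw P phi w r L z = phi (Fw P w (P j)).
Proof. intros HE Hr Hph HL HL0 Hz.
  assert (Tj : tcorner P phi w r L j z = phi (Fw P w (P j))).
  { unfold tcorner. rewrite Rmax_left by lra. ring. }
  assert (Ti : forall i, phi (Fw P w (P j)) <= tcorner P phi w r L i z).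
  { intros i. destruct (idx_eq_dec i j) as [->|Hij]. lra. unfold tcorner.
    pose proof (corner_dist P w i j HE Hij). pose proof (edist_tri (Fw P w (P i)) z (Fw P w (P j))).
    rewrite (edist_sym (Fw P w (P i)) z) in H0.
    assert (h (length w) * side P - 2 * r <= Rmax 0 (edist z (Fw P w (P i)) - r)).
    { apply Rle_trans with (edist z (Fw P w (P i)) - r). lra. apply Rmax_r. }
    specialize (Hph i j). assert (phi (Fw P w (P j)) - phi (Fw P w (P i)) <= h (length w) * side P) by (revert Hph; split_Rabs; lra).
    assert (L * (h (length w) * side P - 2 * r) <= L * Rmax 0 (edist z (Fw P w (P i)) - r)) by (apply Rmult_le_compat_l; auto).
    lra. }
  pose proof (Ti i1). pose proof (Ti i2). pose proof (Ti i3). unfold psiw.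
  destruct j; rewrite <- Tj in *; unfold Rmin; repeat destruct (Rle_dec _ _); lra. Qed.

Lemma psiw_lower P phi w r L z : 0 <= L ->
  Rmin (Rmin (phi (Fw P w (P i1))) (phi (Fw P w (P i2)))) (phi (Fw P w (P i3))) <= psiw P phi w r L z.
Proof. intros HL. unfold psiw, tcorner.
  assert (forall j, 0 <= L * Rmax 0 (edist z (Fw P w (P j)) - r)) by (intros; apply Rmult_le_pos; auto; apply Rmax_l).
  pose proof (H i1). pose proof (H i2). pose proof (H i3). unfold Rmin; repeat destruct (Rle_dec _ _); lra. Qed.

Lemma psiw_upper P phi w r L z : 0 <= L -> 0 <= r ->
  psiw P phi w r L z <= phi (Fw P w (P i1)) + L * edist z (Fw P w (P i1)).
Proof. intros HL Hr. unfold psiw. apply Rle_trans with (tcorner P phi w r L i1 z).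
  unfold Rmin; repeat destruct (Rle_dec _ _); lra. unfold tcorner.
  apply Rplus_le_compat_l. apply Rmult_le_compat_l; auto. apply Rmax_lub. apply edist_ge0. lra. Qed.

Lemma K_near_p1 P K z : equilateral P -> compact_set K -> self_similar P K -> K z -> edist z (P i1) <= side P.
Proof. intros HE HC HS Hz. pose proof (side_pos P HE).
  apply Rsqr_incr_0_var; [|lra]. rewrite !Rsqr_pow2. rewrite (edist_sq_Q P), side_sq by auto.
  destruct (lam_p1 P HE) as [A B]. rewrite A, B. pose proof (K_tri P K z i1 HE HC HS Hz).
  pose proof (K_tri P K z i2 HE HC HS Hz). pose proof (K_tri P K z i3 HE HC HS Hz). simpl in *.
  destruct (equi_facts P HE) as [_ [_ Hs]]. unfold Qf.
  assert ((lam2 P z - 0) ^ 2 + (lam3 P z - 0) ^ 2 + (lam2 P z - 0) * (lam3 P z - 0) <= 1) by nra. nra. Qed.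

Definition pick P K n (z : pt) : list idx * pt :=
  match excluded_middle_informative (exists wy : list idx * pt, length (fst wy) = n /\ K (snd wy) /\ z = Fw P (fst wy) (snd wy)) with
  | left H => proj1_sig (constructive_indefinite_description _ H)
  | right _ => (nil, z) end.

Lemma pick_spec P K n z : self_similar P K -> K z ->
  length (fst (pick P K n z)) = n /\ K (snd (pick P K n z)) /\ z = Fw P (fst (pick P K n z)) (snd (pick P K n z)).
Proof. intros HS Hz. unfold pick. destruct (excluded_middle_informative _) as [H|H].
  - destruct (constructive_indefinite_description _ H) as [wy Hwy]. simpl. auto.
  - exfalso. apply H. destruct (K_iter P K z n HS Hz) as [w [y [A [B C]]]]. exists (w, y). simpl. auto. Qed.

Lemma LB_step P K (phi : pt -> R) C m0 g a b l x y delta n :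
  equilateral P -> compact_set K -> (exists x, K x) -> self_similar P K -> 0 <= C ->
  (forall w i j, (m0 <= length w)%nat -> Rabs (phi (Fw P w (P i)) - phi (Fw P w (P j))) <= h (length w) * side P) ->
  (forall w z i, (m0 <= length w)%nat -> K z -> Rabs (phi (Fw P w z) - phi (Fw P w (P i))) <= C * h (length w)) ->
  is_curve K g a b x y -> is_length g a b l -> 0 < delta <= 1/4 -> (m0 <= n)%nat ->
  (1 - 2 * delta) * (phi y - phi x - 2 * C * h n) - h n * side P <= l.
Proof. intros HE HC Hne HS HC0 Hph1 Hph2 [Hab [Hga [Hgb [HgK Hgc]]]] Hl Hd Hn.
  pose proof (side_pos P HE) as Hsd. pose proof (h_pos n) as Hhn.
  set (H := h n * side P). assert (HH : 0 < H) by (unfold H; nra).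
  set (r := delta * H). set (L := / (1 - 2 * delta)). set (eps := r / 2).
  assert (Hr : 0 < r) by (unfold r; nra). assert (HL : 0 < L) by (unfold L; apply Rinv_0_lt_compat; lra).
  assert (HLr : H <= L * (H - 2 * r)) by (unfold L, r; right; field; lra).
  set (psi := fun z => psiw P phi (fst (pick P K n z)) r L z).
  assert (Hlip : forall z z', K z -> K z' -> edist z z' < eps -> Rabs (psi z - psi z') <= L * edist z z').
  { intros z z' Hz Hz' Hzz. destruct (pick_spec P K n z HS Hz) as [Hl1 [Hy1 E1]].
    destruct (pick_spec P K n z' HS Hz') as [Hl2 [Hy2 E2]]. unfold psi.
    set (w := fst (pick P K n z)) in *. set (w' := fst (pick P K n z')) in *.
    set (y1 := snd (pick P K n z)) in *. set (y2 := snd (pick P K n z')) in *.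
    assert (Hph1w : forall i j, Rabs (phi (Fw P w (P i)) - phi (Fw P w (P j))) <= h (length w) * side P) by (intros; apply Hph1; lia).
    assert (Hph1w' : forall i j, Rabs (phi (Fw P w' (P i)) - phi (Fw P w' (P j))) <= h (length w') * side P) by (intros; apply Hph1; lia).
    pose proof (edist_ge0 z z') as Hd0.
    destruct (cell_rel P K w w' y1 y2 HE HC HS Hy1 Hy2 ltac:(lia)) as [Heq|[[j [j' [Ev [Hv1 Hv2]]]]|Hsep]];
      try rewrite <- E1 in *; try rewrite <- E2 in *.
    - replace (psiw P phi w' r L z') with (psiw P phi w r L z').
      apply psiw_lip; lra. unfold psiw, tcorner. rewrite !Heq. auto.
    - assert (Hsm : edist z z' ^ 2 <= r^2 / 4) by (unfold eps in Hzz; nra).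
      assert (Hz1 : edist z (Fw P w (P j)) <= r).
      { apply Rsqr_incr_0_var; [|lra]. rewrite !Rsqr_pow2. nra. }
      assert (Hz2 : edist z' (Fw P w' (P j')) <= r).
      { rewrite <- Ev. apply Rsqr_incr_0_var; [|lra]. rewrite !Rsqr_pow2. nra. }
      rewrite (psiw_corner P phi w r L j z), (psiw_corner P phi w' r L j' z'); auto; try lra.
      rewrite Ev, Rminus_diag, Rabs_R0. nra. rewrite Hl2; fold H; auto. rewrite Hl1; fold H; auto.
    - exfalso. rewrite Hl1 in Hsep. fold H in Hsep. unfold eps, r in Hzz.
      assert (edist z z' ^ 2 < (delta * H / 2) ^ 2) by (simpl; nra).
      assert (Hdd : delta * delta <= 1/16) by nra.
      assert ((delta * H / 2) ^ 2 <= H^2 / 64).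
      { replace ((delta * H / 2) ^ 2) with (delta * delta * (H^2 / 4)) by (field). 
        pose proof (pow2_ge_0 H). apply Rle_trans with (1/16 * (H^2/4)). apply Rmult_le_compat_r; lra. lra. }
      pose proof (pow2_ge_0 H). lra. }
  assert (Heps : 0 < eps) by (unfold eps; lra).
  destruct (unif_cont g a b Hab Hgc eps Heps) as [d0 [Hd0 Hunif]].
  destruct (INR_archimed d0 (b - a) Hd0) as [M0 HM0]. set (M := S M0).
  assert (HMpos : 0 < INR M) by (apply lt_0_INR; unfold M; lia).
  assert (HMd : (b - a) / INR M < d0).
  { unfold M. rewrite S_INR. apply Rmult_lt_reg_r with (INR M0 + 1). pose proof (pos_INR M0); lra.
    field_simplify. pose proof (pos_INR M0). nra. pose proof (pos_INR M0). lra. }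
  set (s := fun k => a + INR k * ((b - a) / INR M)).
  assert (Hs0 : s O = a) by (unfold s; simpl; ring).
  assert (HsM : s M = b) by (unfold s; field; lra).
  assert (Hstep : forall k, s (S k) - s k = (b - a) / INR M) by (intros; unfold s; rewrite S_INR; ring).
  assert (Hdiv0 : 0 <= (b - a) / INR M) by (apply Rmult_le_pos; [lra|left; apply Rinv_0_lt_compat; auto]).
  assert (Hmono : forall k, (k < M)%nat -> s k <= s (S k)) by (intros k _; pose proof (Hstep k); lra).
  assert (Hrange : forall k, (k <= M)%nat -> a <= s k <= b) by (apply poly_range; auto).
  assert (HV : psum (fun k => edist (g (s k)) (g (s (S k)))) M <= l).
  { apply (proj1 Hl). exists M, s. auto. }
  assert (HV2 : (psi (g b) - psi (g a)) / L <= psum (fun k => edist (g (s k)) (g (s (S k)))) M).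
  { rewrite <- Hs0, <- HsM. unfold Rdiv. rewrite Rmult_comm, Rmult_minus_distr_l.
    rewrite <- (psum_tel (fun k => / L * psi (g (s k))) M). apply psum_le. intros k Hk.
    pose proof (Hrange k ltac:(lia)) as Hr1. pose proof (Hrange (S k) ltac:(lia)) as Hr2.
    assert (Hlt : edist (g (s k)) (g (s (S k))) < eps).
    { apply Hunif; auto. rewrite Rabs_minus_sym, Hstep, Rabs_pos_eq; auto. }
    pose proof (Hlip (g (s (S k))) (g (s k)) (HgK _ Hr2) (HgK _ Hr1) ltac:(rewrite edist_sym; auto)) as H3.
    rewrite edist_sym in H3.
    replace (/ L * psi (g (s (S k))) - / L * psi (g (s k))) with ((psi (g (s (S k))) - psi (g (s k))) / L) by (field; lra).
    apply Rmult_le_reg_r with L; auto. field_simplify; try lra. revert H3; split_Rabs; lra. }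
  assert (Hy : phi y - C * h n <= psi y).
  { pose proof (HgK b ltac:(lra)) as Hyk. rewrite Hgb in Hyk.
    destruct (pick_spec P K n y HS Hyk) as [Hl1 [Hy1 E1]]. unfold psi.
    eapply Rle_trans; [|apply psiw_lower; lra].
    assert (Hcorn : forall i, phi y - C * h n <= phi (Fw P (fst (pick P K n y)) (P i))).
    { intros i. pose proof (Hph2 (fst (pick P K n y)) (snd (pick P K n y)) i ltac:(lia) Hy1) as Hq. rewrite <- E1, Hl1 in Hq.
      revert Hq; split_Rabs; lra. }
    pose proof (Hcorn i1). pose proof (Hcorn i2). pose proof (Hcorn i3). unfold Rmin; repeat destruct (Rle_dec _ _); lra. }
  assert (Hx : psi x <= phi x + C * h n + L * H).
  { pose proof (HgK a ltac:(lra)) as Hxk. rewrite Hga in Hxk.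
    destruct (pick_spec P K n x HS Hxk) as [Hl1 [Hy1 E1]]. unfold psi.
    eapply Rle_trans; [apply psiw_upper; lra|].
    pose proof (Hph2 (fst (pick P K n x)) (snd (pick P K n x)) i1 ltac:(lia) Hy1) as Hq. rewrite <- E1, Hl1 in Hq.
    assert (edist x (Fw P (fst (pick P K n x)) (P i1)) <= H).
    { rewrite E1 at 1. rewrite edist_Fw, Hl1. unfold H. apply Rmult_le_compat_l. lra.
      apply (K_near_p1 P K); auto. }
    assert (L * edist x (Fw P (fst (pick P K n x)) (P i1)) <= L * H) by (apply Rmult_le_compat_l; lra).
    revert Hq; split_Rabs; lra. }
  rewrite Hga, Hgb in HV2.
  assert ((psi y - psi x) / L = (1 - 2 * delta) * (psi y - psi x)) by (unfold L; field; lra).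
  assert (L * H * (1 - 2 * delta) = H) by (unfold L; field; lra).
  assert (0 <= 1 - 2 * delta) by lra.
  assert ((1 - 2 * delta) * (phi y - phi x - 2 * C * h n) - H <= (1 - 2 * delta) * (psi y - psi x)).
  { assert ((1 - 2 * delta) * (phi y - phi x - 2 * C * h n - L * H) <= (1 - 2 * delta) * (psi y - psi x)).
    apply Rmult_le_compat_l; lra. nra. }
  fold H. lra. Qed.

Lemma length_ge0 g a b l : a <= b -> is_length g a b l -> 0 <= l.
Proof. intros Hab [Hub _]. apply Rle_trans with (edist (g a) (g b)). apply edist_ge0.
  apply Hub. exists 1%nat, (fun k => match k with O => a | _ => b end). split; auto. split; auto.
  split. intros k Hk. destruct k; [lra|lia]. simpl. ring. Qed.

Lemma LB P K (phi : pt -> R) C m0 g a b l x y :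
  equilateral P -> compact_set K -> (exists x, K x) -> self_similar P K -> 0 <= C ->
  (forall w i j, (m0 <= length w)%nat -> Rabs (phi (Fw P w (P i)) - phi (Fw P w (P j))) <= h (length w) * side P) ->
  (forall w z i, (m0 <= length w)%nat -> K z -> Rabs (phi (Fw P w z) - phi (Fw P w (P i))) <= C * h (length w)) ->
  is_curve K g a b x y -> is_length g a b l -> phi y - phi x <= l.
Proof. intros HE HC Hne HS HC0 Hph1 Hph2 Hcur Hl.
  pose proof (length_ge0 g a b l (proj1 Hcur) Hl) as Hl0.
  apply Rnot_lt_le. intros Hlt. set (D := phi y - phi x) in *. set (gap := D - l).
  assert (HD : 0 < D) by lra.
  set (delta := Rmin (1/4) (gap / (8 * D))).
  assert (Hdel : 0 < delta <= 1/4).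
  { split. apply Rmin_pos. lra. apply Rdiv_lt_0_compat; unfold gap; lra. apply Rmin_l. }
  assert (Hdel2 : 2 * delta * D <= gap / 4).
  { pose proof (Rmin_r (1/4) (gap / (8 * D))). fold delta in H.
    apply Rle_trans with (2 * (gap / (8 * D)) * D). apply Rmult_le_compat_r; lra. right; field; lra. }
  pose proof (side_pos P HE).
  destruct (h_smallC (gap / 4) (2 * C + side P)) as [n0 Hn0]. unfold gap; lra. lra.
  set (n := Nat.max n0 m0).
  assert (Hhn : h n <= h n0) by (apply h_mono; unfold n; lia).
  pose proof (h_pos n).
  pose proof (LB_step P K phi C m0 g a b l x y delta n HE HC Hne HS HC0 Hph1 Hph2 Hcur Hl Hdel ltac:(unfold n; lia)).
  assert (h n * (2 * C + side P) < gap / 4) by (apply Rle_lt_trans with (h n0 * (2 * C + side P)); auto; apply Rmult_le_compat_r; lra).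
  fold D in H1. unfold gap in *.
  assert ((1 - 2 * delta) * (2 * C * h n) <= 2 * C * h n).
  { assert (0 <= 2 * C * h n) by nra. nra. }
  nra. Qed.

Definition edgeP P (m : nat) (x y : pt) : Prop :=
  exists w i j, length w = m /\ i <> j /\ x = Fw P w (P i) /\ y = Fw P w (P j).

Inductive walk P (m : nat) : pt -> pt -> nat -> Prop :=
  | walk0 x : walk P m x x 0
  | walkS x y z n : edgeP P m x y -> walk P m y z n -> walk P m x z (S n).

Lemma edgeP_sym P m x y : edgeP P m x y -> edgeP P m y x.
Proof. intros [w [i [j [H1 [H2 [H3 H4]]]]]]. exists w, j, i. auto. Qed.

Lemma walk_app P m x y z n1 n2 : walk P m x y n1 -> walk P m y z n2 -> walk P m x z (n1 + n2).
Proof. induction 1; intros H2; simpl; auto. econstructor; eauto. Qed.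

Lemma walk_snoc P m x y z n : walk P m x y n -> edgeP P m y z -> walk P m x z (S n).
Proof. intros H He. replace (S n) with (n + 1)%nat by lia. apply walk_app with y; auto.
  econstructor; eauto. constructor. Qed.

Lemma walk_rev P m x y n : walk P m x y n -> walk P m y x n.
Proof. induction 1. constructor. apply walk_snoc with y; auto. apply edgeP_sym; auto. Qed.

Lemma walk_map P m c x y n : walk P m x y n -> walk P (S m) (Fmap P c x) (Fmap P c y) n.
Proof. induction 1. constructor. econstructor; eauto.
  destruct H as [w [i [j [H1 [H2 [H3 H4]]]]]]. exists (c :: w), i, j. simpl. subst. auto. Qed.

Lemma Fmap_swap P c k : Fmap P c (P k) = Fmap P k (P c).
Proof. unfold Fmap. simpl. f_equal; field. Qed.

Lemma Fw_repeat_fix' P a n : Fw P (repeat a n) (P a) = P a.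
Proof. apply Fw_repeat_fix. Qed.

Lemma conn P m : forall w i k, length w = m -> exists n, walk P m (Fw P w (P i)) (P k) n.
Proof. induction m; intros w i k Hl.
  - destruct w; [|simpl in Hl; lia]. simpl. destruct (idx_eq_dec i k) as [->|Hik].
    exists O. constructor. exists 1%nat. econstructor; [|constructor]. exists nil, i, k. simpl. auto.
  - destruct w as [|c w']; simpl in Hl; [lia|]. injection Hl as Hl. simpl.
    destruct (IHm w' i k Hl) as [n1 Hw1]. apply (walk_map P m c) in Hw1.
    destruct (idx_eq_dec c k) as [->|Hck].
    + rewrite Fmap_fix in Hw1. eauto.
    + rewrite Fmap_swap in Hw1.
      destruct (IHm (repeat c m) c k (repeat_length c m)) as [n2 Hw2]. rewrite Fw_repeat_fix in Hw2.
      apply (walk_map P m k) in Hw2. rewrite Fmap_fix in Hw2.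
      exists (n1 + n2)%nat. eapply walk_app; eauto. Qed.

Lemma walk_vertices P m w w' i j : length w = m -> length w' = m ->
  exists n, walk P m (Fw P w (P i)) (Fw P w' (P j)) n.
Proof. intros H1 H2. destruct (conn P m w i i1 H1) as [n1 W1]. destruct (conn P m w' j i1 H2) as [n2 W2].
  exists (n1 + n2)%nat. eapply walk_app; eauto. apply walk_rev; auto. Qed.

Lemma walk_seq P m x y n : walk P m x y n ->
  exists z : nat -> pt, z O = x /\ z n = y /\ forall k, (k < n)%nat -> edgeP P m (z k) (z (S k)).
Proof. induction 1.
  - exists (fun _ => x). split; auto. split; auto. intros; lia.
  - destruct IHwalk as [z' [A [B C]]]. exists (fun k => match k with O => x | S k' => z' k' end).
    split; auto. split; auto. intros k Hk. destruct k. rewrite A. auto. apply C. lia. Qed.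

Definition Dn P m p c : nat :=
  match excluded_middle_informative (exists n, walk P m p c n /\ forall n', walk P m p c n' -> (n <= n')%nat) with
  | left H => proj1_sig (constructive_indefinite_description _ H) | right _ => O end.

Lemma Dn_spec P m p c : (exists n, walk P m p c n) ->
  walk P m p c (Dn P m p c) /\ forall n', walk P m p c n' -> (Dn P m p c <= n')%nat.
Proof. intros Hex. unfold Dn. destruct (excluded_middle_informative _) as [H|H].
  - destruct (constructive_indefinite_description _ H) as [n Hn]. simpl. auto.
  - exfalso. apply H. destruct (exists_least _ Hex) as [n [Hn Hmin]]. exists n. split; auto.
    intros n' Hn'. destruct (Nat.le_gt_cases n n'); auto. exfalso. apply (Hmin n'); auto. Qed.

Definition isvert P m x := exists w i, length w = m /\ x = Fw P w (P i).

Lemma Dn_p P m p : Dn P m p p = O.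
Proof. assert (H : exists n, walk P m p p n) by (exists O; constructor).
  destruct (Dn_spec P m p p H) as [_ Hm]. specialize (Hm O (walk0 P m p)). lia. Qed.

Lemma Dn_edge P m p w i j : isvert P m p -> length w = m ->
  (Dn P m p (Fw P w (P j)) <= Dn P m p (Fw P w (P i)) + 1)%nat.
Proof. intros [w0 [a0 [Hl0 ->]]] Hl.
  destruct (Dn_spec P m (Fw P w0 (P a0)) (Fw P w (P i)) (walk_vertices P m w0 w a0 i Hl0 Hl)) as [W _].
  destruct (Dn_spec P m (Fw P w0 (P a0)) (Fw P w (P j)) (walk_vertices P m w0 w a0 j Hl0 Hl)) as [_ Hmin].
  destruct (idx_eq_dec i j) as [->|Hij]. lia.
  replace (Dn P m (Fw P w0 (P a0)) (Fw P w (P i)) + 1)%nat with (S (Dn P m (Fw P w0 (P a0)) (Fw P w (P i)))) by lia.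
  apply Hmin. apply walk_snoc with (Fw P w (P i)); auto. exists w, i, j. auto. Qed.

Definition Tk P m p w k x := h m * side P * INR (Dn P m p (Fw P w (P k))) + side P * (lam P k (Fw P w (P k)) - lam P k x).
Definition phiw P m p w x := Rmin (Rmin (Tk P m p w i1 x) (Tk P m p w i2 x)) (Tk P m p w i3 x).
Definition phi P K m p x := phiw P m p (fst (pick P K m x)) x.

Lemma phiw_corner P m p w j : equilateral P -> isvert P m p -> length w = m ->
  phiw P m p w (Fw P w (P j)) = h m * side P * INR (Dn P m p (Fw P w (P j))).
Proof. intros HE Hp Hl. pose proof (side_pos P HE). pose proof (h_pos m).
  assert (Tj : Tk P m p w j (Fw P w (P j)) = h m * side P * INR (Dn P m p (Fw P w (P j)))) by (unfold Tk; ring).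
  assert (Ti : forall i, h m * side P * INR (Dn P m p (Fw P w (P j))) <= Tk P m p w i (Fw P w (P j))).
  { intros i. unfold Tk. rewrite !lam_corner by auto. rewrite Hl.
    destruct (idx_eq_dec i j) as [->|Hij]. lra.
    unfold dlt. destruct (idx_eq_dec i i); [|congruence]. destruct (idx_eq_dec i j); [congruence|].
    pose proof (Dn_edge P m p w i j Hp Hl). apply le_INR in H1. rewrite plus_INR in H1. simpl in H1.
    assert (h m * side P * INR (Dn P m p (Fw P w (P j))) <= h m * side P * (INR (Dn P m p (Fw P w (P i))) + 1)).
    apply Rmult_le_compat_l; nra. nra. }
  pose proof (Ti i1). pose proof (Ti i2). pose proof (Ti i3). unfold phiw.
  destruct j; rewrite <- Tj in *; unfold Rmin; repeat destruct (Rle_dec _ _); lra. Qed.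

Lemma phiw_lip P m p w x x' c : equilateral P -> (forall k, Rabs (lam P k x - lam P k x') <= c) ->
  Rabs (phiw P m p w x - phiw P m p w x') <= side P * c.
Proof. intros HE Hc. pose proof (side_pos P HE). unfold phiw.
  assert (forall k, Rabs (Tk P m p w k x - Tk P m p w k x') <= side P * c).
  { intros k. unfold Tk. replace (h m * side P * INR (Dn P m p (Fw P w (P k))) + side P * (lam P k (Fw P w (P k)) - lam P k x) -
     (h m * side P * INR (Dn P m p (Fw P w (P k))) + side P * (lam P k (Fw P w (P k)) - lam P k x'))) with
     (side P * (lam P k x' - lam P k x)) by ring. rewrite Rabs_mult, Rabs_pos_eq by lra.
    apply Rmult_le_compat_l. lra. rewrite Rabs_minus_sym. auto. }
  repeat apply Rmin_lip; auto. Qed.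

Lemma phi_cell P K m p w y : equilateral P -> compact_set K -> self_similar P K -> isvert P m p ->
  length w = m -> K y -> phi P K m p (Fw P w y) = phiw P m p w (Fw P w y).
Proof. intros HE HC HS Hp Hl Hy. unfold phi.
  destruct (pick_spec P K m (Fw P w y) HS (K_Fw P K w y HS Hy)) as [Hl1 [Hy1 E1]].
  set (w' := fst (pick P K m (Fw P w y))) in *. set (y' := snd (pick P K m (Fw P w y))) in *.
  destruct (cell_rel P K w' w y' y HE HC HS Hy1 Hy ltac:(lia)) as [Heq|[[j [j' [Ev [Hv1 Hv2]]]]|Hsep]];
    try rewrite <- E1 in *.
  - unfold phiw, Tk. rewrite !Heq. auto.
  - rewrite edist_refl in Hv1. assert (Fw P w y = Fw P w' (P j)).
    { apply edist_eq0. apply Rsqr_0_uniq. rewrite Rsqr_pow2. pose proof (pow2_ge_0 (edist (Fw P w y) (Fw P w' (P j)))). lra. }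
    rewrite H at 1 2. rewrite phiw_corner by auto. rewrite Ev. rewrite phiw_corner by auto. rewrite <- Ev. auto.
  - rewrite edist_refl in Hsep. pose proof (h_pos (length w')). pose proof (side_pos P HE).
    assert (0 < h (length w') * side P) by nra. exfalso. nra. Qed.

Lemma lam_le1 P K z i : equilateral P -> compact_set K -> self_similar P K -> K z -> lam P i z <= 1.
Proof. intros HE HC HS Hz. pose proof (lam_sum P z).
  pose proof (K_tri P K z i1 HE HC HS Hz). pose proof (K_tri P K z i2 HE HC HS Hz). pose proof (K_tri P K z i3 HE HC HS Hz).
  destruct i; lra. Qed.

Lemma phi_deep P K m p w x : equilateral P -> compact_set K -> self_similar P K -> isvert P m p ->
  (m <= length w)%nat -> K x -> phi P K m p (Fw P w x) = phiw P m p (firstn m w) (Fw P w x).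
Proof. intros HE HC HS Hp Hm Hx. rewrite <- (firstn_skipn m w) at 1 3. rewrite Fw_app.
  apply phi_cell; auto. rewrite length_firstn. lia. apply K_Fw; auto. Qed.

Lemma K_P P K a : compact_set K -> (exists x, K x) -> self_similar P K -> K (P a).
Proof. intros. apply (K_vert P K nil a); auto. Qed.

Lemma phi_H1 P K m p w i j : equilateral P -> compact_set K -> (exists x, K x) -> self_similar P K -> isvert P m p ->
  (m <= length w)%nat -> Rabs (phi P K m p (Fw P w (P i)) - phi P K m p (Fw P w (P j))) <= h (length w) * side P.
Proof. intros HE HC Hne HS Hp Hm. rewrite !phi_deep by (auto; apply K_P; auto).
  rewrite Rmult_comm. apply phiw_lip; auto. intros k. rewrite !lam_corner by auto.
  pose proof (h_pos (length w)). unfold dlt. repeat destruct (idx_eq_dec _ _); split_Rabs; lra. Qed.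

Lemma phi_H2 P K m p w z i : equilateral P -> compact_set K -> (exists x, K x) -> self_similar P K -> isvert P m p ->
  (m <= length w)%nat -> K z -> Rabs (phi P K m p (Fw P w z) - phi P K m p (Fw P w (P i))) <= side P * h (length w).
Proof. intros HE HC Hne HS Hp Hm Hz. rewrite !phi_deep by (auto; apply K_P; auto).
  apply phiw_lip; auto. intros k. rewrite lam_Fw, lam_corner by auto.
  pose proof (h_pos (length w)). pose proof (K_tri P K z k HE HC HS Hz). pose proof (lam_le1 P K z k HE HC HS Hz).
  assert (Rabs (lam P k z - dlt k i) <= 1) by (unfold dlt; destruct (idx_eq_dec k i); split_Rabs; lra).
  replace (h (length w) * lam P k z + kap k w - (h (length w) * dlt k i + kap k w)) with (h (length w) * (lam P k z - dlt k i)) by ring.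
  rewrite Rabs_mult, Rabs_pos_eq by lra. nra. Qed.

Lemma idx_lt_total i j : i <> j -> idx_lt i j \/ idx_lt j i.
Proof. destruct i, j; simpl; intros; try congruence; tauto. Qed.

Lemma trav_edge P (Rc : nat -> pt -> Prop) W Aa Bb Z q k w i j : equilateral P ->
  (forall j, idx_lt (Aa j) (Bb j) /\ set_eq (Rc j) (cell_edge P (W j) (Aa j) (Bb j))) ->
  (forall w a b, idx_lt a b -> exists! j, set_eq (Rc j) (cell_edge P w a b)) ->
  conv_to Z q -> 0 < ell Z k -> i <> j -> Z k = Fw P w (P i) -> Z (S k) = Fw P w (P j) ->
  exists J, traverses Rc (alph P W Aa Bb) (rr P W Aa Bb) (gcurve Z q) (TT Z k) (TT Z (S k)) J.
Proof. intros HE HW H2 Hc Hl Hij Ek ESk.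
  assert (Hseg : exists a b, idx_lt a b /\ set_eq (segset (Fw P w (P a)) (Fw P w (P b))) (segset (Z k) (Z (S k)))).
  { destruct (idx_lt_total i j Hij) as [Hlt|Hlt].
    - exists i, j. split; auto. intros x. rewrite Ek, ESk. tauto.
    - exists j, i. split; auto. intros x. rewrite Ek, ESk. apply segset_sym. }
  destruct Hseg as [a [b [Hab Hs]]]. destruct (H2 w a b Hab) as [J [HJ _]]. exists J.
  assert (HR : set_eq (Rc J) (segset (Z k) (Z (S k)))).
  { intros x. rewrite (HJ x), cell_edge_segset. apply (Hs x). }
  split.
  - intros x. rewrite (HR x). apply gcurve_image; auto.
  - destruct (HW J) as [HltJ HWJ]. pose proof (idx_lt_neq _ _ HltJ) as HneJ.
    assert (Hs2 : set_eq (segset (Aj P W Aa J) (Aj P W Bb J)) (segset (Z k) (Z (S k)))).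
    { intros x. unfold Aj. rewrite <- cell_edge_segset, <- (HWJ x). apply (HR x). }
    pose proof (alph_pos P W Aa Bb J HE HneJ).
    assert (R0 : rr P W Aa Bb J 0 = Aj P W Aa J) by (unfold rr; unfold Rdiv; rewrite Rmult_0_l; apply seg0).
    assert (R1 : rr P W Aa Bb J (alph P W Aa Bb J) = Aj P W Bb J) by (unfold rr; rewrite Rdiv_diag by lra; apply seg1).
    rewrite R0, R1, !g_T by auto.
    destruct (seg_ends _ _ _ _ (Aj_neq P W Aa Bb J HE HneJ) Hs2) as [[E1 E2]|[E1 E2]]; [left|right]; split; congruence. Qed.

Definition astep P (K : pt -> Prop) (y : pt) : idx * pt :=
  match excluded_middle_informative (exists iy : idx * pt, K (snd iy) /\ y = Fmap P (fst iy) (snd iy)) with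
  | left H => proj1_sig (constructive_indefinite_description _ H) | right _ => (i1, y) end.

Lemma astep_spec P K y : self_similar P K -> K y -> K (snd (astep P K y)) /\ y = Fmap P (fst (astep P K y)) (snd (astep P K y)).
Proof. intros HS Hy. unfold astep. destruct (excluded_middle_informative _) as [H|H].
  - destruct (constructive_indefinite_description _ H) as [iy Hiy]. simpl. auto.
  - exfalso. apply H. apply HS in Hy. destruct Hy as [i [y' [A B]]]. exists (i, y'). simpl. auto. Qed.

Fixpoint Yseq P K y0 t : pt := match t with O => y0 | S t' => snd (astep P K (Yseq P K y0 t')) end.
Fixpoint Wseq P K y0 t : list idx := match t with O => nil | S t' => Wseq P K y0 t' ++ fst (astep P K (Yseq P K y0 t')) :: nil end.

Lemma seq_inv P K y0 t : self_similar P K -> K y0 ->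
  K (Yseq P K y0 t) /\ y0 = Fw P (Wseq P K y0 t) (Yseq P K y0 t) /\ length (Wseq P K y0 t) = t.
Proof. intros HS Hy. induction t; simpl. auto.
  destruct IHt as [A [B C]]. destruct (astep_spec P K _ HS A) as [D E]. split; auto.
  rewrite Fw_app. simpl. rewrite <- E. split; auto. rewrite length_app. simpl. lia. Qed.

Definition Eseq P K y0 i t : pt := Fw P (Wseq P K y0 t) (P i).

Lemma Eseq_step P K y0 i t : exists om,
  Eseq P K y0 i t = Fw P (Wseq P K y0 t ++ i :: nil) (P i) /\ Eseq P K y0 i (S t) = Fw P (Wseq P K y0 t ++ i :: nil) (P om).
Proof. exists (fst (astep P K (Yseq P K y0 t))). unfold Eseq. simpl. rewrite !Fw_app. simpl.
  rewrite Fmap_fix, Fmap_swap. auto. Qed.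

Lemma Rmin3_att (f : idx -> R) : exists i, Rmin (Rmin (f i1) (f i2)) (f i3) = f i.
Proof. unfold Rmin. repeat destruct (Rle_dec _ _); eauto. Qed.

Lemma Wseq_length P K y0 t : length (Wseq P K y0 t) = t.
Proof. induction t; simpl; auto. rewrite length_app, IHt. simpl. lia. Qed.

Lemma geodesic_exists P K (Rc : nat -> pt -> Prop) W Aa Bb m p q :
  equilateral P -> compact_set K -> (exists x, K x) -> self_similar P K ->
  (forall j, idx_lt (Aa j) (Bb j) /\ set_eq (Rc j) (cell_edge P (W j) (Aa j) (Bb j))) ->
  (forall w a b, idx_lt a b -> exists! j, set_eq (Rc j) (cell_edge P w a b)) ->
  isvert P m p -> K q ->
  exists (g : R -> pt) (a b : R), min_geodesic K g a b p q /\ concat_of_curves Rc (alph P W Aa Bb) (rr P W Aa Bb) g a b q.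
Proof. intros HE HC Hne HS HW H2 Hp Hq.
  pose proof (side_pos P HE) as Hsd. pose proof (h_pos m) as Hhm.
  destruct (pick_spec P K m q HS Hq) as [Hlq [Hyq Eq]].
  set (wq := fst (pick P K m q)) in *. set (yq := snd (pick P K m q)) in *.
  destruct (Rmin3_att (fun k => Tk P m p wq k q)) as [i Hi].
  set (c := Fw P wq (P i)).
  assert (Hphiq : phi P K m p q = Tk P m p wq i q).
  { unfold phi. fold wq. rewrite <- Hi. auto. }
  destruct Hp as [w0 [a0 [Hl0 Ep]]].
  assert (Hvp : isvert P m p) by (exists w0, a0; auto).
  destruct (Dn_spec P m p c) as [Hwk _]. rewrite Ep. apply walk_vertices; auto.
  set (N := Dn P m p c) in *. destruct (walk_seq P m p c N Hwk) as [zw [Z0 [ZN Zed]]].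
  set (Zf := fun k => if Nat.leb k N then zw k else Fw P wq (Eseq P K yq i (k - N))).
  set (u := h m * side P).
  assert (F1 : forall k, (k <= N)%nat -> Zf k = zw k).
  { intros k Hk. unfold Zf. apply Nat.leb_le in Hk. rewrite Hk. auto. }
  assert (F1' : forall t, Zf (N + t)%nat = Fw P wq (Eseq P K yq i t)).
  { intros t. unfold Zf. destruct (Nat.leb (N + t) N) eqn:E.
    - apply Nat.leb_le in E. assert (t = O) by lia. subst t. rewrite Nat.add_0_r, ZN. reflexivity.
    - f_equal. f_equal. lia. }
  assert (Sst : forall k, exists v a b, Zf k = Fw P v (P a) /\ Zf (S k) = Fw P v (P b) /\
     ((k < N)%nat /\ length v = m \/ (N <= k)%nat /\ length v = (m + (k - N) + 1)%nat /\ a = i)).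
  { intros k. destruct (Nat.lt_ge_cases k N) as [Hk|Hk].
    - destruct (Zed k Hk) as [v [a [b [Hv [Hab [E1 E2]]]]]]. exists v, a, b.
      rewrite F1, F1 by lia. auto.
    - destruct (Eseq_step P K yq i (k - N)) as [om [A B]].
      exists (wq ++ Wseq P K yq (k - N) ++ i :: nil), i, om.
      replace k with (N + (k - N))%nat at 1 by lia. replace (S k) with (N + S (k - N))%nat by lia.
      rewrite !F1', A, B, <- !Fw_app. split; auto. split; auto. right. split; [lia|]. split; auto.
      rewrite !length_app, Wseq_length. simpl. lia. }
  assert (HKseg : forall k v, 0 <= v <= 1 -> K (seg (Zf k) (Zf (S k)) v)).
  { intros k v Hv. destruct (Sst k) as [w [a [b [E1 [E2 _]]]]]. rewrite E1, E2, <- Fw_seg.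
    apply K_Fw; auto. apply K_seg; auto. }
  assert (Hell_lt : forall k, (k < N)%nat -> ell Zf k = u).
  { intros k Hk. destruct (Zed k Hk) as [v [a [b [Hv [Hab [E1 E2]]]]]]. unfold ell.
    rewrite F1, F1, E1, E2 by lia. rewrite corner_dist by auto. rewrite Hv. auto. }
  assert (Hell_ge : forall k, (N <= k)%nat -> ell Zf k = side P * (lam P i (Zf k) - lam P i (Zf (S k)))).
  { intros k Hk. destruct (Sst k) as [v [a [b [E1 [E2 [[Hk' _]|[_ [Hv Ea]]]]]]]]. lia. subst a.
    unfold ell. rewrite E1, E2, !lam_corner by auto. destruct (idx_eq_dec i b) as [<-|Hib].
    rewrite edist_refl. ring. rewrite corner_dist by auto. unfold dlt.
    destruct (idx_eq_dec i i); [|congruence]. destruct (idx_eq_dec i b); [congruence|]. ring. }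
  assert (TT1 : forall k, (k <= N)%nat -> TT Zf k = INR k * u).
  { induction k; intros Hk. rewrite TT_0. simpl; ring. rewrite TT_S, IHk, Hell_lt by lia. rewrite S_INR. ring. }
  assert (TT2 : forall t, TT Zf (N + t) = INR N * u + side P * (lam P i c - lam P i (Zf (N + t)%nat))).
  { induction t. replace (N + 0)%nat with N by lia. rewrite TT1, F1, ZN by lia. ring.
    replace (N + S t)%nat with (S (N + t)) by lia. rewrite TT_S, IHt, Hell_ge by lia. ring. }
  set (L := INR N * u + side P * (lam P i c - lam P i q)).
  assert (HLphi : L = phi P K m p q).
  { rewrite Hphiq. unfold Tk, L, N, u. fold c. ring. }
  assert (Hgapt : forall t, lam P i (Zf (N + t)%nat) - lam P i q = h (m + t) * (1 - lam P i (Yseq P K yq t))).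
  { intros t. destruct (seq_inv P K yq t HS Hyq) as [_ [Ey Hlt]].
    assert (Eqt : q = Fw P (wq ++ Wseq P K yq t) (Yseq P K yq t)) by (rewrite Fw_app, <- Ey; auto).
    rewrite F1'. unfold Eseq. rewrite <- Fw_app. rewrite Eqt at 1.
    rewrite !lam_Fw, lam_P by auto. rewrite length_app, Hlq, Hlt. unfold dlt.
    destruct (idx_eq_dec i i); [|congruence]. ring. }
  assert (Hgap0 : forall t, 0 <= lam P i (Zf (N + t)%nat) - lam P i q <= h (m + t)).
  { intros t. rewrite Hgapt. destruct (seq_inv P K yq t HS Hyq) as [HY _].
    pose proof (K_tri P K _ i HE HC HS HY). pose proof (lam_le1 P K _ i HE HC HS HY). pose proof (h_pos (m + t)).
    split; nra. }
  assert (HLb : forall k, TT Zf k <= L).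
  { intros k. destruct (Nat.le_gt_cases k N) as [Hk|Hk].
    - rewrite TT1 by auto. pose proof (Hgap0 O) as H. rewrite F1' in H. unfold Eseq in H. simpl in H. fold c in H.
      unfold L. assert (INR k * u <= INR N * u) by (apply Rmult_le_compat_r; [unfold u; nra|apply le_INR; auto]). nra.
    - replace k with (N + (k - N))%nat by lia. rewrite TT2. unfold L. pose proof (Hgap0 (k - N)%nat). nra. }
  assert (HL : forall e, 0 < e -> exists M, L - TT Zf M < e).
  { intros e He. destruct (h_smallC e (side P) He ltac:(lra)) as [t Ht]. exists (N + t)%nat.
    rewrite TT2. unfold L. pose proof (Hgap0 t). pose proof (h_mono t (m + t) ltac:(lia)).
    apply Rle_lt_trans with (side P * h (m + t)). nra. nra. }
  destruct (K_bdd P K HC) as [Mb [HMb HBd]].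
  assert (Hconv : conv_to Zf q).
  { intros e He. destruct (h_smallC e (Mb + side P) He ltac:(lra)) as [t0 Ht0]. exists (N + t0)%nat.
    intros k Hk. replace k with (N + (k - N))%nat by lia. set (t := (k - N)%nat).
    destruct (seq_inv P K yq t HS Hyq) as [HY [Ey Hlt]].
    assert (Eqt : q = Fw P (wq ++ Wseq P K yq t) (Yseq P K yq t)) by (rewrite Fw_app, <- Ey; auto).
    rewrite F1'. unfold Eseq. rewrite <- Fw_app. rewrite Eqt at 1.
    rewrite edist_Fw, length_app, Hlq, Hlt.
    assert (edist (P i) (Yseq P K yq t) <= Mb + side P).
    { pose proof (edist_tri (P i) (P i1) (Yseq P K yq t)). rewrite (edist_sym (P i1)) in H.
      pose proof (HBd _ HY). assert (edist (P i) (P i1) <= side P).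
      { destruct (idx_eq_dec i i1) as [->|Hne']. rewrite edist_refl; lra. rewrite side_ab; auto. lra. }
      lra. }
    pose proof (h_mono t0 (m + t) ltac:(unfold t; lia)). pose proof (h_pos (m + t)).
    pose proof (edist_ge0 (P i) (Yseq P K yq t)). apply Rle_lt_trans with (h t0 * (Mb + side P)); auto.
    apply Rle_trans with (h (m + t) * (Mb + side P)). apply Rmult_le_compat_l; lra. apply Rmult_le_compat_r; lra. }
  assert (HZ0 : Zf O = p) by (rewrite F1 by lia; auto).
  exists (gcurve Zf q), 0, L. split.
  - split. rewrite <- HZ0. apply gcurve_curve; auto.
    exists L. split. apply gcurve_length; auto.
    intros g' a' b' l' Hc' Hl'.
    pose proof (LB P K (phi P K m p) (side P) m g' a' b' l' p q HE HC Hne HS ltac:(lra)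
      (fun w i j Hw => phi_H1 P K m p w i j HE HC Hne HS Hvp Hw)
      (fun w z i Hw Hz => phi_H2 P K m p w z i HE HC Hne HS Hvp Hw Hz) Hc' Hl').
    assert (phi P K m p p = 0).
    { assert (HKa : K (P a0)) by (apply K_P; auto). rewrite Ep at 2. rewrite (phi_cell P K m p w0 (P a0) HE HC HS Hvp Hl0 HKa).
      rewrite phiw_corner by auto. rewrite <- Ep, Dn_p. simpl. ring. }
    lra.
  - apply concat_extract; auto. intros k Hk. destruct (Sst k) as [v [a [b [E1 [E2 _]]]]].
    destruct (idx_eq_dec a b) as [<-|Hab].
    + exfalso. unfold ell in Hk. rewrite E1, E2, edist_refl in Hk. lra.
    + eapply trav_edge; eauto. Qed.

Theorem proposition2 (P : idx -> pt) (K : pt -> Prop) (Rc : nat -> pt -> Prop) :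
  equilateral P ->
  compact_set K -> (exists x, K x) -> self_similar P K ->
  (* Rc enumerates all cell edges F_w([p_a,p_b]), a < b, each exactly once *)
  (forall j, exists w a b, idx_lt a b /\ set_eq (Rc j) (cell_edge P w a b)) ->
  (forall w a b, idx_lt a b -> exists! j, set_eq (Rc j) (cell_edge P w a b)) ->
  (* in non-increasing order of length *)
  (forall j w a b w' a' b',
     set_eq (Rc j) (cell_edge P w a b) ->
     set_eq (Rc (S j)) (cell_edge P w' a' b') ->
     edge_length P w' a' b' <= edge_length P w a b) ->
  exists (alpha : nat -> R) (r : nat -> R -> pt),
    Axiom1 K Rc alpha r /\ Axiom2 K Rc alpha r.
Proof.
  intros HE HC Hne HS H1 H2 H3.
  assert (H1' : forall j, exists t : list idx * idx * idx,
    idx_lt (snd (fst t)) (snd t) /\ set_eq (Rc j) (cell_edge P (fst (fst t)) (snd (fst t)) (snd t))).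
  { intros j. destruct (H1 j) as [w [a [b Hab]]]. exists (w, a, b). simpl. auto. }
  set (rep := fun j => proj1_sig (constructive_indefinite_description _ (H1' j))).
  set (W := fun j => fst (fst (rep j))). set (Aa := fun j => snd (fst (rep j))). set (Bb := fun j => snd (rep j)).
  assert (HW : forall j, idx_lt (Aa j) (Bb j) /\ set_eq (Rc j) (cell_edge P (W j) (Aa j) (Bb j))).
  { intros j. unfold W, Aa, Bb, rep. destruct (constructive_indefinite_description _ (H1' j)) as [t Ht]. simpl. auto. }
  exists (alph P W Aa Bb), (rr P W Aa Bb). split.
  - split; [|split].
    + intros j. destruct (HW j) as [Hlt Hs]. apply axiom1_curve; auto.
    + apply (axiom1_closure P K Rc); auto.
    + apply (axiom1_cv P Rc); auto.
  - exists (fun x => exists w a, x = Fw P w (P a)). split; [|split].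
    + intros x [w [a ->]]. apply K_vert; auto.
    + intros x Hx e He. destruct (K_approx P K HC HS) as [M [HM HA]].
      destruct (h_smallC e M He HM) as [n Hn]. destruct (HA x n Hx) as [w [Hl Hd]].
      exists (Fw P w (P i1)). split. eauto. lra.
    + intros p q [w [a Ep]] Hq. apply (geodesic_exists P K Rc W Aa Bb (length w) p q); auto.
      exists w, a. auto.
Qed.
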